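(* Let $b>0$ and $c\ge1$ be constants, and for each $M\in\mathbb{N}$ let $a_M\in[1/2,1)$ with $a_M/(1-a_M)\le c^M$. Let $A_1=\{z\in\mathbb{R}^M:\sum_iz_i<0\}$, $A_2=\{z:\sum_iz_i\ge0\}$ and $$\tilde\pi(z)\propto a_MN_M(z;-b\mathbf{1}_M,I_M)\mathbf{1}_{A_1}(z)+(1-a_M)N_M(z;b\mathbf{1}_M,I_M)\mathbf{1}_{A_2}(z).$$ Let $\beta_0<\beta_1<\dots<\beta_N$ be the distinct elements of $\{M^{-(M-k)/M}:k=0,\dots,M\}\cup\{k/M:k=1,\dots,M\}$ in increasing order, and $\pi_k\propto\tilde\pi^{\beta_k}$. Then for $\mathcal{A}=\{A_1,\dots,A_2\}$: $\pi_k[A_1]$ is nondecreasing in $k$, $\gamma(\mathcal{A})\ge1/2$, and $\delta(\mathcal{A})\ge\frac{1}{2c\sqrt M}$.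
   Context: $N_M(z;\nu,\Sigma)$ is the $M$-variate normal density; $\mathbf{1}_M$ the all-ones vector; $I_M$ the identity; Lebesgue measure on $\mathbb{R}^M$; $\pi_k[A]=\int_A\pi_k$. Overlap $\delta(\mathcal{A})=\min_{|k-l|=1,\,j}\frac{1}{\pi_k[A_j]}\int_{A_j}\min\{\pi_k,\pi_l\}$ with $k,l\in\{0,\dots,N\}$; $\gamma(\mathcal{A})=\min_j\prod_{k=1}^N\min\{1,\pi_{k-1}[A_j]/\pi_k[A_j]\}$. *)

(* Defs.v *)
From Stdlib Require Import Reals Lra ClassicalEpsilon.
Open Scope R_scope.

(* Points of R^M are represented as z : nat -> R; only z 0, ..., z (M-1) matter. *)

Fixpoint sumM (M : nat) (g : nat -> R) : R :=
  match M with O => 0 | S m => sumM m g + g m end.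

Fixpoint prod1N (N : nat) (h : nat -> R) : R :=
  match N with O => 1 | S n => prod1N n h * h (S n) end.

Definition vcons (x : R) (v : nat -> R) : nat -> R :=
  fun i => match i with O => x | S j => v j end.

Definition improper_int_is (f : R -> R) (l : R) : Prop :=
  forall eps, 0 < eps -> exists T, forall lo hi, lo <= - T -> T <= hi ->
    exists pr : Riemann_integrable f lo hi, Rabs (RiemannInt pr - l) < eps.

Definition Int1 (f : R -> R) : R := epsilon (inhabits 0) (improper_int_is f).

(* Lebesgue integral over R^M of a nonnegative function, computed as an
   iterated integral (Tonelli). *)
Fixpoint IntRM (M : nat) (F : (nat -> R) -> R) : R :=
  match M with
  | O => F (fun _ => 0)
  | S m => Int1 (fun x => IntRM m (fun v => F (vcons x v)))
  end.

Definition normal_iso (M : nat) (mu : nat -> R) (z : nat -> R) : R :=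
  / Rpower (2 * PI) (INR M / 2) * exp (- (1/2) * sumM M (fun i => (z i - mu i) ^ 2)).

Definition indA (M : nat) (j : nat) (z : nat -> R) : R :=
  match j with
  | 1%nat => if Rlt_dec (sumM M z) 0 then 1 else 0
  | _ => if Rle_dec 0 (sumM M z) then 1 else 0
  end.

Definition pitilde_un (M : nat) (b a : R) (z : nat -> R) : R :=
  a * normal_iso M (fun _ => - b) z * indA M 1 z
  + (1 - a) * normal_iso M (fun _ => b) z * indA M 2 z.

Definition pitilde (M : nat) (b a : R) (z : nat -> R) : R :=
  pitilde_un M b a z / IntRM M (pitilde_un M b a).

Definition pi_temp (M : nat) (b a beta : R) (z : nat -> R) : R :=
  Rpower (pitilde M b a z) beta / IntRM M (fun y => Rpower (pitilde M b a y) beta).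

Definition prob (M : nat) (b a beta : R) (j : nat) : R :=
  IntRM M (fun z => indA M j z * pi_temp M b a beta z).

Definition gammaA (M : nat) (b a : R) (N : nat) (beta : nat -> R) : R :=
  let g j := prod1N N (fun k => Rmin 1 (prob M b a (beta (k - 1)%nat) j / prob M b a (beta k) j)) in
  Rmin (g 1%nat) (g 2%nat).

(* the quantity inside the min defining delta(A) *)
Definition overlap (M : nat) (b a betak betal : R) (j : nat) : R :=
  / prob M b a betak j *
  IntRM M (fun z => indA M j z * Rmin (pi_temp M b a betak z) (pi_temp M b a betal z)).

Definition in_beta_set (M : nat) (x : R) : Prop :=
  (exists k, (k <= M)%nat /\ x = Rpower (INR M) (- (INR M - INR k) / INR M))
  \/ (exists k, (1 <= k <= M)%nat /\ x = INR k / INR M).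

(* Main.v *)
Require Import Defs.
From Stdlib Require Import Reals Lra Lia ClassicalEpsilon Classical FunctionalExtensionality.
From Coquelicot Require Import Coquelicot.
Open Scope R_scope.

Definition II (f : R -> R) (l : R) := forall eps, 0 < eps -> exists T, 0 <= T /\
  forall lo hi, lo <= -T -> T <= hi -> ex_RInt f lo hi /\ Rabs (RInt f lo hi - l) < eps.

Lemma II_impr f l : II f l -> improper_int_is f l.
Proof.
  intros H eps Heps. destruct (H eps Heps) as [T [_ HT]]. exists T. intros lo hi H1 H2.
  destruct (HT lo hi H1 H2) as [Hex Hab].
  exists (ex_RInt_Reals_0 _ _ _ Hex). rewrite <- RInt_Reals. exact Hab.
Qed.

Lemma impr_II f l : improper_int_is f l -> II f l.
Proof.
  intros H eps Heps. destruct (H eps Heps) as [T HT]. exists (Rabs T). split; [apply Rabs_pos|].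
  intros lo hi H1 H2.
  assert (H1' : lo <= - T) by (pose proof (Rle_abs T); pose proof (Rle_abs (-T)); rewrite Rabs_Ropp in *; lra).
  assert (H2' : T <= hi) by (pose proof (Rle_abs T); lra).
  destruct (HT lo hi H1' H2') as [pr Hpr]. split. apply ex_RInt_Reals_1; exact pr.
  rewrite (RInt_Reals _ _ _ pr). exact Hpr.
Qed.

Lemma II_unique f l l' : II f l -> II f l' -> l = l'.
Proof.
  intros H H'. apply Rminus_diag_uniq. apply Rabs_eq_0.
  apply Rle_antisym; [|apply Rabs_pos].
  apply Rnot_lt_le. intro Hp.
  set (e := Rabs (l - l') / 2). assert (He : 0 < e) by (unfold e; lra).
  destruct (H e He) as [T [HT0 HT]]. destruct (H' e He) as [T' [HT0' HT']].
  set (U := Rmax T T').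
  destruct (HT (-U) U) as [_ A1]; [unfold U; pose proof (Rmax_l T T'); lra| unfold U; apply Rmax_l|].
  destruct (HT' (-U) U) as [_ A2]; [unfold U; pose proof (Rmax_r T T'); lra| unfold U; apply Rmax_r|].
  assert (Rabs (l - l') <= Rabs (RInt f (-U) U - l') + Rabs (RInt f (-U) U - l)).
  { replace (l - l') with ((RInt f (-U) U - l') - (RInt f (-U) U - l)) by ring.
    eapply Rle_trans; [apply Rabs_triang|]. rewrite Rabs_Ropp. lra. }
  unfold e in *; lra.
Qed.

Lemma Int1_II f l : II f l -> Int1 f = l.
Proof.
  intro H. unfold Int1.
  apply (II_unique f); [|exact H]. apply impr_II.
  apply epsilon_spec. exists l. apply II_impr; exact H.
Qed.

Lemma Int1_spec f : (exists l, II f l) -> II f (Int1 f).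
Proof. intros [l H]. rewrite (Int1_II f l H). exact H. Qed.

Lemma II_plus f g l l' : II f l -> II g l' -> II (fun x => f x + g x) (l + l').
Proof.
  intros H H' eps Heps.
  destruct (H (eps/2)) as [T [HT0 HT]]; [lra|]. destruct (H' (eps/2)) as [T' [HT0' HT']]; [lra|].
  exists (Rmax T T'). split; [pose proof (Rmax_l T T'); lra|]. intros lo hi H1 H2.
  pose proof (Rmax_l T T'); pose proof (Rmax_r T T').
  destruct (HT lo hi) as [E1 A1]; try lra. destruct (HT' lo hi) as [E2 A2]; try lra.
  split. apply (ex_RInt_plus f g); auto.
  rewrite (RInt_plus f g) by auto. change (plus (RInt f lo hi) (RInt g lo hi)) with (RInt f lo hi + RInt g lo hi).
  replace (RInt f lo hi + RInt g lo hi - (l + l')) with ((RInt f lo hi - l) + (RInt g lo hi - l')) by ring.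
  eapply Rle_lt_trans; [apply Rabs_triang|]. lra.
Qed.

Lemma RInt_scalR c (f : R -> R) a b : ex_RInt f a b -> RInt (fun x => c * f x) a b = c * RInt f a b.
Proof. intro H. exact (RInt_scal f a b c H). Qed.
Lemma RInt_plusR (f g : R -> R) a b : ex_RInt f a b -> ex_RInt g a b -> RInt (fun x => f x + g x) a b = RInt f a b + RInt g a b.
Proof. intros H H'. exact (RInt_plus f g a b H H'). Qed.

Lemma II_scal c f l : II f l -> II (fun x => c * f x) (c * l).
Proof.
  intros H eps Heps.
  destruct (H (eps / (Rabs c + 1))) as [T [HT0 HT]].
  { apply Rdiv_lt_0_compat; [lra| pose proof (Rabs_pos c); lra]. }
  exists T. split; auto. intros lo hi H1 H2. destruct (HT lo hi H1 H2) as [E A].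
  split. apply (ex_RInt_scal f lo hi c); auto.
  rewrite RInt_scalR by auto.
  replace (c * RInt f lo hi - c * l) with (c * (RInt f lo hi - l)) by ring.
  rewrite Rabs_mult. pose proof (Rabs_pos c). pose proof (Rabs_pos (RInt f lo hi - l)).
  apply Rle_lt_trans with ((Rabs c + 1) * Rabs (RInt f lo hi - l)). nra.
  apply Rmult_lt_reg_l with (/ (Rabs c + 1)). apply Rinv_0_lt_compat; lra.
  rewrite <- Rmult_assoc, Rinv_l by lra. lra.
Qed.

Lemma II_ext f g l : (forall x, f x = g x) -> II f l -> II g l.
Proof.
  intros E H. replace g with f; auto. apply functional_extensionality; auto.
Qed.

Lemma II_le f g l l' : (forall x, f x <= g x) -> II f l -> II g l' -> l <= l'.
Proof.
  intros Hle H H'. apply Rnot_lt_le. intro Hp.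
  set (e := (l - l') / 2). assert (He : 0 < e) by (unfold e; lra).
  destruct (H e He) as [T [HT0 HT]]. destruct (H' e He) as [T' [HT0' HT']].
  pose proof (Rmax_l T T'); pose proof (Rmax_r T T').
  set (U := Rmax T T') in *.
  destruct (HT (-U) U) as [E1 A1]; try lra. destruct (HT' (-U) U) as [E2 A2]; try lra.
  assert (RInt f (-U) U <= RInt g (-U) U) by (apply RInt_le; auto; lra).
  apply Rabs_def2 in A1. apply Rabs_def2 in A2. unfold e in *. lra.
Qed.

Lemma ex_RInt_scalR c (f : R -> R) a b : ex_RInt f a b -> ex_RInt (fun x => c * f x) a b.
Proof. intro H. exact (ex_RInt_scal f a b c H). Qed.

Lemma ex_RInt_linR (f : R -> R) u v a b : u <> 0 -> ex_RInt f (u*a+v) (u*b+v) -> ex_RInt (fun y => f (u*y+v)) a b.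
Proof.
  intros Hu H. pose proof (ex_RInt_comp_lin f u v a b H) as H1.
  apply (ex_RInt_scalR (/u)) in H1.
  eapply ex_RInt_ext; [|exact H1]. intros x _. simpl. unfold scal; simpl; unfold mult; simpl.
  field. auto.
Qed.

Lemma RInt_linR (f : R -> R) u v a b : u <> 0 -> ex_RInt f (u*a+v) (u*b+v) ->
  RInt (fun y => f (u*y+v)) a b = / u * RInt f (u*a+v) (u*b+v).
Proof.
  intros Hu H. pose proof (RInt_comp_lin f u v a b H) as H1.
  assert (E1 : ex_RInt (fun y => u * f (u*y+v)) a b) by exact (ex_RInt_comp_lin f u v a b H).
  assert (H2 : RInt (fun y => u * f (u*y+v)) a b = RInt f (u*a+v) (u*b+v)) by exact H1.
  rewrite <- H2. rewrite RInt_scalR by (apply ex_RInt_linR; auto).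
  rewrite <- Rmult_assoc, Rinv_l by auto. symmetry; apply Rmult_1_l.
Qed.

Lemma II_lin f l u v : 0 < u -> II f l -> II (fun x => f (u*x+v)) (l / u).
Proof.
  intros Hu H eps Heps.
  destruct (H (eps * u)) as [T [HT0 HT]]; [nra|].
  exists ((T + Rabs v) / u). split. apply Rdiv_le_0_compat; [pose proof (Rabs_pos v)|]; lra.
  intros lo hi H1 H2.
  assert (Hlo : u * lo + v <= - T).
  { apply Rmult_le_compat_l with (r := u) in H1; [|lra].
    replace (u * - ((T + Rabs v) / u)) with (-(T + Rabs v)) in H1 by (field; lra).
    pose proof (Rle_abs v); lra. }
  assert (Hhi : T <= u * hi + v).
  { apply Rmult_le_compat_l with (r := u) in H2; [|lra].
    replace (u * ((T + Rabs v) / u)) with (T + Rabs v) in H2 by (field; lra).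
    pose proof (Rle_abs (-v)); rewrite Rabs_Ropp in *; lra. }
  destruct (HT _ _ Hlo Hhi) as [E A]. split. apply ex_RInt_linR; auto; lra.
  rewrite RInt_linR; auto; try lra.
  replace (/ u * RInt f (u * lo + v) (u * hi + v) - l / u) with (/u * (RInt f (u * lo + v) (u * hi + v) - l)) by (field; lra).
  rewrite Rabs_mult, Rabs_right by (left; apply Rinv_0_lt_compat; lra).
  apply Rmult_lt_reg_l with u; auto. rewrite <- Rmult_assoc, Rinv_r by lra. lra.
Qed.

Lemma II_opp (f : R -> R) l : II f l -> II (fun x => f (- x)) l.
Proof.
  intros H eps Heps. destruct (H eps Heps) as [T [HT0 HT]]. exists T. split; auto.
  intros lo hi H1 H2. destruct (HT (-hi) (-lo)) as [E A]; try lra.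
  assert (E' : ex_RInt f (-1 * lo + 0) (-1 * hi + 0)).
  { apply ex_RInt_swap. replace (-1*lo+0) with (-lo) by ring. replace (-1*hi+0) with (-hi) by ring. auto. }
  assert (EQ : forall y, f (-y) = f (-1 * y + 0)) by (intro; f_equal; ring).
  split.
  - eapply ex_RInt_ext; [|apply (ex_RInt_linR f (-1) 0); [lra|exact E']]. intros; simpl; rewrite EQ; auto.
  - rewrite (RInt_ext (fun x => f (-x)) (fun y => f (-1*y+0))) by (intros; apply EQ).
    rewrite RInt_linR; [|lra|auto].
    replace (-1*lo+0) with (-lo) by ring. replace (-1*hi+0) with (-hi) by ring.
    rewrite <- (opp_RInt_swap f (-hi) (-lo) E).
    change (opp (RInt f (- hi) (- lo))) with (- RInt f (- hi) (- lo)).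
    replace (/ -1 * - RInt f (- hi) (- lo) - l) with (RInt f (- hi) (- lo) - l) by field. auto.
Qed.

Lemma II_exists (f : R -> R) B : (forall lo hi, ex_RInt f lo hi) -> (forall x, 0 <= f x) ->
  (forall lo hi, lo <= hi -> RInt f lo hi <= B) -> exists l, II f l.
Proof.
  intros Hex Hpos Hb.
  set (E := fun y => exists r, 0 <= r /\ y = RInt f (-r) r).
  assert (Hbd : bound E). { exists B. intros y [r [Hr ->]]. apply Hb. lra. }
  assert (Hne : exists y, E y). { exists (RInt f (-0) 0). exists 0. split; auto; lra. }
  destruct (completeness E Hbd Hne) as [l [Hub Hlub]].
  exists l. intros eps Heps.
  assert (Hex2 : exists y, E y /\ l - eps < y).
  { apply not_all_not_ex. intro Hn. assert (l <= l - eps); [|lra].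
    apply Hlub. intros y Hy. specialize (Hn y). apply Rnot_lt_le. intro. apply Hn; auto. }
  destruct Hex2 as [y [[r [Hr ->]] Hy]].
  exists r. split; auto. intros lo hi H1 H2. split; auto.
  assert (Hge : RInt f (-r) r <= RInt f lo hi).
  { rewrite <- (RInt_Chasles f lo (-r) hi) by auto. rewrite <- (RInt_Chasles f (-r) r hi) by auto.
    change (RInt f (-r) r <= RInt f lo (-r) + (RInt f (-r) r + RInt f r hi)).
    assert (0 <= RInt f lo (-r)) by (apply RInt_ge_0; auto; lra).
    assert (0 <= RInt f r hi) by (apply RInt_ge_0; auto; lra). lra. }
  set (r' := Rmax (-lo) hi).
  assert (Hle : RInt f lo hi <= RInt f (-r') r').
  { pose proof (Rmax_l (-lo) hi); pose proof (Rmax_r (-lo) hi).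
    rewrite <- (RInt_Chasles f (-r') lo r') by auto. rewrite <- (RInt_Chasles f lo hi r') by auto.
    change (RInt f lo hi <= RInt f (-r') lo + (RInt f lo hi + RInt f hi r')).
    assert (0 <= RInt f (-r') lo) by (apply RInt_ge_0; auto; unfold r' in *; lra).
    assert (0 <= RInt f hi r') by (apply RInt_ge_0; auto; unfold r' in *; lra). lra. }
  assert (RInt f (-r') r' <= l). { apply Hub. exists r'. split; auto. unfold r'. pose proof (Rmax_r (-lo) hi); lra. }
  apply Rabs_def1; lra.
Qed.

Lemma II_RInt_le (f : R -> R) l lo hi : (forall x, 0 <= f x) -> II f l -> lo <= hi -> RInt f lo hi <= l.
Proof.
  intros Hpos H Hlh. apply Rnot_lt_le. intro Hp.
  set (e := (RInt f lo hi - l)). assert (He : 0 < e) by (unfold e; lra).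
  destruct (H e He) as [T [HT0 HT]].
  set (r := Rmax T (Rmax (-lo) hi)).
  pose proof (Rmax_l T (Rmax (-lo) hi)). pose proof (Rmax_r T (Rmax (-lo) hi)).
  pose proof (Rmax_l (-lo) hi). pose proof (Rmax_r (-lo) hi).
  destruct (HT (-r) r) as [Ex A]; try (unfold r; lra).
  assert (Ex1 : ex_RInt f (-r) hi) by (apply (ex_RInt_Chasles_1 f (-r) hi r); auto; unfold r; lra).
  assert (Ex2 : ex_RInt f (-r) lo) by (apply (ex_RInt_Chasles_1 f (-r) lo hi); auto; unfold r; lra).
  assert (Ex3 : ex_RInt f lo hi) by (apply (ex_RInt_Chasles_2 f (-r) lo hi); auto; unfold r; lra).
  assert (Ex4 : ex_RInt f hi r) by (apply (ex_RInt_Chasles_2 f (-r) hi r); auto; unfold r; lra).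
  rewrite <- (RInt_Chasles f (-r) lo r) in A by (auto; apply (ex_RInt_Chasles f lo hi r); auto).
  rewrite <- (RInt_Chasles f lo hi r) in A by auto.
  change (Rabs (RInt f (-r) lo + (RInt f lo hi + RInt f hi r) - l) < e) in A.
  assert (0 <= RInt f (-r) lo) by (apply RInt_ge_0; auto; unfold r; lra).
  assert (0 <= RInt f hi r) by (apply RInt_ge_0; auto; unfold r; lra).
  apply Rabs_def2 in A. unfold e in *. lra.
Qed.

Lemma II_onepoint (f g : R -> R) l x0 : (forall x, x <> x0 -> f x = g x) -> II f l -> II g l.
Proof.
  intros Hfg H eps Heps. destruct (H eps Heps) as [T [HT0 HT]].
  exists (T + Rabs x0 + 1). split. pose proof (Rabs_pos x0); lra.
  intros lo hi H1 H2. pose proof (Rle_abs x0). pose proof (Rle_abs (-x0)). rewrite Rabs_Ropp in *.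
  destruct (HT lo hi) as [E A]; try lra.
  assert (E1 : ex_RInt f lo x0) by (apply (ex_RInt_Chasles_1 f lo x0 hi); auto; lra).
  assert (E2 : ex_RInt f x0 hi) by (apply (ex_RInt_Chasles_2 f lo x0 hi); auto; lra).
  assert (G1 : ex_RInt g lo x0).
  { eapply ex_RInt_ext; [|exact E1]. intros x Hx. apply Hfg. rewrite Rmax_right in Hx by lra. lra. }
  assert (G2 : ex_RInt g x0 hi).
  { eapply ex_RInt_ext; [|exact E2]. intros x Hx. apply Hfg. rewrite Rmin_left in Hx by lra. lra. }
  split. apply (ex_RInt_Chasles g lo x0 hi); auto.
  rewrite <- (RInt_Chasles g lo x0 hi) by auto.
  rewrite <- (RInt_ext f g lo x0) by (intros x Hx; apply Hfg; rewrite Rmax_right in Hx by lra; lra).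
  rewrite <- (RInt_ext f g x0 hi) by (intros x Hx; apply Hfg; rewrite Rmin_left in Hx by lra; lra).
  change (Rabs (RInt f lo x0 + RInt f x0 hi - l) < eps).
  assert (HC : RInt f lo x0 + RInt f x0 hi = RInt f lo hi) by exact (RInt_Chasles f lo x0 hi E1 E2).
  rewrite HC. auto.
Qed.

Definition gs (be mu x : R) : R := exp (- (be / 2) * (x - mu) ^ 2).

Lemma gs_cont be mu x : continuous (gs be mu) x.
Proof. apply continuity_pt_filterlim. unfold gs. reg. Qed.

Lemma gs_pos be mu x : 0 < gs be mu x.
Proof. apply exp_pos. Qed.

Lemma gs_le1 be mu x : 0 <= be -> gs be mu x <= 1.
Proof.
  intro H. unfold gs. rewrite <- exp_0. destruct (Req_dec (- (be / 2) * (x - mu) ^ 2) 0) as [E|E].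
  rewrite E; lra. left; apply exp_increasing. pose proof (pow2_ge_0 (x - mu)). nra.
Qed.

Lemma ex_RInt_cont (f : R -> R) : (forall x, continuous f x) -> forall lo hi, ex_RInt f lo hi.
Proof. intros H lo hi. apply (@ex_RInt_continuous R_CompleteNormedModule). intros; apply H. Qed.

Lemma ex_RInt_piece (f g h : R -> R) c :
  (forall x, x < c -> f x = g x) -> (forall x, c < x -> f x = h x) ->
  (forall lo hi, ex_RInt g lo hi) -> (forall lo hi, ex_RInt h lo hi) ->
  forall lo hi, ex_RInt f lo hi.
Proof.
  intros Hg Hh Eg Eh.
  assert (K : forall lo hi, lo <= hi -> ex_RInt f lo hi).
  { intros lo hi Hl.
    destruct (Rle_dec hi c) as [H1|H1].
    - eapply ex_RInt_ext; [|apply (Eg lo hi)]. intros x Hx. rewrite Rmax_right in Hx by lra. symmetry; apply Hg; lra.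
    - destruct (Rle_dec c lo) as [H2|H2].
      + eapply ex_RInt_ext; [|apply (Eh lo hi)]. intros x Hx. rewrite Rmin_left in Hx by lra. symmetry; apply Hh; lra.
      + apply (ex_RInt_Chasles f lo c hi).
        * eapply ex_RInt_ext; [|apply (Eg lo c)]. intros x Hx. rewrite Rmax_right in Hx by lra. symmetry; apply Hg; lra.
        * eapply ex_RInt_ext; [|apply (Eh c hi)]. intros x Hx. rewrite Rmin_left in Hx by lra. symmetry; apply Hh; lra. }
  intros lo hi. destruct (Rle_dec lo hi). auto. apply ex_RInt_swap. apply K. lra.
Qed.

Lemma ex_RInt_zero lo hi : ex_RInt (fun _ : R => 0) lo hi.
Proof. apply (ex_RInt_const lo hi (0:R)). Qed.

Lemma II_box (f : R -> R) p q : p <= q -> (forall x, x < p -> f x = 0) -> (forall x, q < x -> f x = 0) ->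
  (forall x, p < x < q -> f x = 1) -> II f (q - p).
Proof.
  intros Hpq H1 H2 H3 eps Heps. exists (Rabs p + Rabs q + 1). split. pose proof (Rabs_pos p); pose proof (Rabs_pos q); lra.
  intros lo hi Hlo Hhi.
  pose proof (Rle_abs p); pose proof (Rle_abs (-p)); pose proof (Rle_abs q); pose proof (Rle_abs (-q)); rewrite !Rabs_Ropp in *.
  assert (E1 : ex_RInt f lo p). { eapply ex_RInt_ext; [|apply (ex_RInt_zero lo p)]. intros x Hx. rewrite Rmax_right in Hx by lra. symmetry; apply H1; lra. }
  assert (E2 : ex_RInt f p q). { eapply ex_RInt_ext; [|apply (ex_RInt_const p q (1:R))]. intros x Hx. rewrite Rmax_right in Hx by lra. rewrite Rmin_left in Hx by lra. symmetry; apply H3; lra. }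
  assert (E3 : ex_RInt f q hi). { eapply ex_RInt_ext; [|apply (ex_RInt_zero q hi)]. intros x Hx. rewrite Rmin_left in Hx by lra. symmetry; apply H2; lra. }
  assert (R1 : RInt f lo p = 0). { rewrite (RInt_ext f (fun _ => 0)). rewrite RInt_const. apply Rmult_0_r. intros x Hx. rewrite Rmax_right in Hx by lra. apply H1; lra. }
  assert (R2 : RInt f p q = q - p). { rewrite (RInt_ext f (fun _ => 1)). rewrite RInt_const. apply Rmult_1_r. intros x Hx. rewrite Rmax_right in Hx by lra. rewrite Rmin_left in Hx by lra. apply H3; lra. }
  assert (R3 : RInt f q hi = 0). { rewrite (RInt_ext f (fun _ => 0)). rewrite RInt_const. apply Rmult_0_r. intros x Hx. rewrite Rmin_left in Hx by lra. apply H2; lra. }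
  assert (E12 : ex_RInt f lo q) by (apply (ex_RInt_Chasles f lo p q); auto).
  split. apply (ex_RInt_Chasles f lo q hi); auto.
  assert (C1 : RInt f lo p + RInt f p q = RInt f lo q) by exact (RInt_Chasles f lo p q E1 E2).
  assert (C2 : RInt f lo q + RInt f q hi = RInt f lo hi) by exact (RInt_Chasles f lo q hi E12 E3).
  rewrite <- C2, <- C1, R1, R2, R3. replace (0 + (q - p) + 0 - (q - p)) with 0 by ring. rewrite Rabs_R0. auto.
Qed.

Lemma II_nonneg (f : R -> R) l : (forall x, 0 <= f x) -> II f l -> 0 <= l.
Proof. intros Hp H. pose proof (II_RInt_le f l 0 0 Hp H (Rle_refl 0)). rewrite RInt_point in H0. exact H0. Qed.

Lemma Rabs_le_inv a b : Rabs a <= b -> - b <= a <= b.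
Proof. intro H. pose proof (Rle_abs a). pose proof (Rle_abs (-a)). rewrite Rabs_Ropp in *. lra. Qed.

Lemma II_abs_le (f g : R -> R) l l' : (forall x, Rabs (f x) <= g x) -> II f l -> II g l' -> Rabs l <= l'.
Proof.
  intros Hb H H'. apply Rabs_le. split.
  - assert (- l' <= l); [|lra]. replace (-l') with (-1 * l') by ring.
    apply (II_le (fun x => -1 * g x) f). intro x. specialize (Hb x). apply Rabs_le_inv in Hb. lra.
    apply II_scal; auto. auto.
  - apply (II_le f g); auto. intro x. specialize (Hb x). apply Rabs_le_inv in Hb. lra.
Qed.

Lemma gauss_bound x : exp (- (1/2) * x^2) <= 2 / (1 + x^2).
Proof.
  assert (H : 1 + (1/2) * x^2 <= exp ((1/2) * x^2)).
  { pose proof (exp_ineq1_le ((1/2)*x^2)). lra. }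
  replace (- (1 / 2) * x ^ 2) with (- ((1/2) * x^2)) by ring.
  rewrite exp_Ropp. pose proof (pow2_ge_0 x).
  apply Rle_trans with (/ (1 + (1/2) * x^2)).
  apply Rinv_le_contravar; lra.
  unfold Rdiv. apply Rmult_le_reg_l with ((1 + x^2) * (1 + (1/2)*x^2)). nra.
  field_simplify; try nra.
Qed.

Lemma atan_is_derive x : is_derive (fun y => 2 * atan y) x (2 / (1 + x^2)).
Proof.
  pose proof (is_derive_scal atan x 2 _ (is_derive_atan x)) as H.
  replace (2 / (1 + x^2)) with (2 * / (1 + x²)). exact H.
  unfold Rsqr. simpl. field. nra.
Qed.

Lemma gs1_exists : exists l, II (gs 1 0) l.
Proof.
  apply (II_exists _ (2 * PI)).
  - apply ex_RInt_cont. apply gs_cont.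
  - intro; left; apply gs_pos.
  - intros lo hi Hlh.
    assert (Hd : forall x, Rmin lo hi <= x <= Rmax lo hi -> is_derive (fun y => 2 * atan y) x (2 / (1 + x^2))) by (intros; apply atan_is_derive).
    assert (Hc : forall x, Rmin lo hi <= x <= Rmax lo hi -> continuous (fun x => 2 / (1 + x^2)) x).
    { intros. apply continuity_pt_filterlim. reg. nra. }
    pose proof (is_RInt_derive _ _ lo hi Hd Hc) as HI.
    apply Rle_trans with (RInt (fun x => 2 / (1 + x^2)) lo hi).
    + apply RInt_le; auto. apply ex_RInt_cont; apply gs_cont. exists (minus (2 * atan hi) (2 * atan lo)); exact HI.
      intros x _. unfold gs. replace (x - 0) with x by ring. apply gauss_bound.
    + rewrite (is_RInt_unique _ _ _ _ HI). change (minus (2 * atan hi) (2 * atan lo)) with (2 * atan hi - 2 * atan lo).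
      pose proof (atan_bound hi); pose proof (atan_bound lo). lra.
Qed.

Definition K1 : R := Int1 (gs 1 0).

Lemma II_K1 : II (gs 1 0) K1.
Proof. apply Int1_spec. apply gs1_exists. Qed.

Lemma K1_nonneg : 0 <= K1.
Proof. apply (II_nonneg (gs 1 0)). intro; left; apply gs_pos. apply II_K1. Qed.

Lemma gs_scale be mu x : 0 < be -> gs be mu x = gs 1 0 (sqrt be * x + - (sqrt be * mu)).
Proof.
  intro Hb. unfold gs. f_equal.
  replace ((sqrt be * x + - (sqrt be * mu) - 0) ^ 2) with ((sqrt be)^2 * (x - mu)^2) by ring.
  assert (E : sqrt be ^ 2 = be) by (rewrite <- Rsqr_pow2; apply Rsqr_sqrt; lra). rewrite E. field.
Qed.

Definition Kg (be : R) : R := K1 / sqrt be.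

Lemma II_gs be mu : 0 < be -> II (gs be mu) (Kg be).
Proof.
  intro Hb. unfold Kg. eapply II_ext; [|apply II_lin; [apply sqrt_lt_R0; exact Hb| apply II_K1]].
  intro x. simpl. rewrite <- gs_scale; auto.
Qed.

Lemma Kg_nonneg be : 0 < be -> 0 <= Kg be.
Proof. intro. unfold Kg. apply Rdiv_le_0_compat. apply K1_nonneg. apply sqrt_lt_R0; auto. Qed.

Fixpoint Good (m : nat) (F : (nat -> R) -> R) : Prop :=
  match m with
  | O => True
  | S m' => (forall x, Good m' (fun v => F (vcons x v))) /\
            exists l, II (fun x => IntRM m' (fun v => F (vcons x v))) l
  end.

Lemma Good_II m F : Good (S m) F -> II (fun x => IntRM m (fun v => F (vcons x v))) (IntRM (S m) F).
Proof. intros [_ H]. simpl. apply Int1_spec. exact H. Qed.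

Lemma Good_ext m F G : (forall z, F z = G z) -> Good m F -> Good m G.
Proof. intros E H. replace G with F; auto. apply functional_extensionality; auto. Qed.

Lemma IntRM_ext m F G : (forall z, F z = G z) -> IntRM m F = IntRM m G.
Proof. intros E. replace G with F; auto. apply functional_extensionality; auto. Qed.

Lemma Good_plus m : forall F G, Good m F -> Good m G ->
  Good m (fun z => F z + G z) /\ IntRM m (fun z => F z + G z) = IntRM m F + IntRM m G.
Proof.
  induction m as [|m IH]; intros F G HF HG.
  - simpl. auto.
  - pose proof (Good_II m F HF) as IF. pose proof (Good_II m G HG) as IG.
    destruct HF as [HF _]. destruct HG as [HG _].
    assert (E : forall x, IntRM m (fun v => F (vcons x v) + G (vcons x v)) =
                          IntRM m (fun v => F (vcons x v)) + IntRM m (fun v => G (vcons x v))).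
    { intro x. apply (IH _ _ (HF x) (HG x)). }
    assert (II (fun x => IntRM m (fun v => F (vcons x v) + G (vcons x v))) (IntRM (S m) F + IntRM (S m) G)).
    { eapply II_ext; [|apply II_plus; [exact IF|exact IG]]. intro x. simpl. rewrite E. reflexivity. }
    split.
    + split. intro x. apply (IH _ _ (HF x) (HG x)). eexists; eauto.
    + simpl. apply Int1_II. exact H.
Qed.

Lemma Good_scal m : forall c F, Good m F ->
  Good m (fun z => c * F z) /\ IntRM m (fun z => c * F z) = c * IntRM m F.
Proof.
  induction m as [|m IH]; intros c F HF.
  - simpl. auto.
  - pose proof (Good_II m F HF) as IF. destruct HF as [HF _].
    assert (E : forall x, IntRM m (fun v => c * F (vcons x v)) = c * IntRM m (fun v => F (vcons x v))).
    { intro x. apply (IH _ _ (HF x)). }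
    assert (II (fun x => IntRM m (fun v => c * F (vcons x v))) (c * IntRM (S m) F)).
    { eapply II_ext; [|apply II_scal; exact IF]. intro x. simpl. rewrite E. reflexivity. }
    split.
    + split. intro x. apply (IH _ _ (HF x)). eexists; eauto.
    + simpl. apply Int1_II. exact H.
Qed.

Lemma Good_mono m : forall F G, Good m F -> Good m G -> (forall z, F z <= G z) -> IntRM m F <= IntRM m G.
Proof.
  induction m as [|m IH]; intros F G HF HG Hle.
  - simpl. apply Hle.
  - pose proof (Good_II m F HF) as IF. pose proof (Good_II m G HG) as IG.
    destruct HF as [HF _]. destruct HG as [HG _].
    apply (II_le _ _ _ _ (fun x => IH _ _ (HF x) (HG x) (fun v => Hle (vcons x v))) IF IG).
Qed.

Lemma Good_nonneg m : forall F, Good m F -> (forall z, 0 <= F z) -> 0 <= IntRM m F.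
Proof.
  intros F HF Hp. replace 0 with (IntRM m (fun z => 0 * F z)).
  apply Good_mono. apply Good_scal; auto. auto. intro z. specialize (Hp z). lra.
  rewrite (proj2 (Good_scal m 0 F HF)). ring.
Qed.

Definition ilt (x y : R) : R := if Rlt_dec x y then 1 else 0.
Definition ile (x y : R) : R := if Rle_dec x y then 1 else 0.
Definition sq (m : nat) (mu : R) (v : nat -> R) : R := sumM m (fun i => (v i - mu) ^ 2).

Definition Term (m : nat) (be mu Rr s : R) (ball dir : bool) (v : nat -> R) : R :=
  exp (- (be / 2) * sq m mu v) * (if ball then ilt (sq m mu v) Rr else 1) *
  (if dir then ilt (sumM m v) s else ile s (sumM m v)).

Definition Val m be mu Rr s ball dir := IntRM m (Term m be mu Rr s ball dir).

Lemma sumM_S m g : sumM (S m) g = g 0%nat + sumM m (fun i => g (S i)).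
Proof.
  induction m as [|m IH]. simpl. ring.
  change (sumM (S (S m)) g) with (sumM (S m) g + g (S m)). rewrite IH. simpl. ring.
Qed.

Lemma ilt_shift a b c : ilt (a + b) c = ilt b (c - a).
Proof. unfold ilt. destruct (Rlt_dec (a + b) c); destruct (Rlt_dec b (c - a)); auto; lra. Qed.
Lemma ile_shift a b c : ile c (a + b) = ile (c - a) b.
Proof. unfold ile. destruct (Rle_dec c (a + b)); destruct (Rle_dec (c - a) b); auto; lra. Qed.

Lemma Term_vcons m be mu Rr s ball dir x v :
  Term (S m) be mu Rr s ball dir (vcons x v) = gs be mu x * Term m be mu (Rr - (x - mu)^2) (s - x) ball dir v.
Proof.
  unfold Term, sq. rewrite !sumM_S. simpl vcons.
  replace (- (be / 2) * ((x - mu) ^ 2 + sumM m (fun i : nat => (v i - mu) ^ 2)))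
    with (- (be / 2) * (x - mu) ^ 2 + - (be / 2) * sumM m (fun i : nat => (v i - mu) ^ 2)) by ring.
  rewrite exp_plus. unfold gs.
  change (fun i : nat => v i) with v.
  destruct ball; destruct dir; rewrite ?ilt_shift, ?ile_shift; ring.
Qed.

Lemma Val0 be mu Rr s ball dir : Val 0 be mu Rr s ball dir =
  (if ball then ilt 0 Rr else 1) * (if dir then ilt 0 s else ile s 0).
Proof. unfold Val, Term, sq. simpl. rewrite Rmult_0_r, exp_0, Rmult_1_l. reflexivity. Qed.

Lemma Term_nonneg m be mu Rr s ball dir v : 0 <= Term m be mu Rr s ball dir v.
Proof.
  unfold Term, ilt, ile. pose proof (exp_pos (- (be / 2) * sq m mu v)).
  destruct ball; destruct dir; repeat match goal with |- context [if ?c then _ else _] => destruct c end; lra.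
Qed.

Lemma squeeze_cont (f k : R -> R) x0 : (forall x, Rabs (f x - f x0) <= k x) -> continuity_pt k x0 -> k x0 = 0 ->
  continuity_pt f x0.
Proof.
  intros Hb Hk Hk0 eps Heps. destruct (Hk eps Heps) as [alp [Ha H]]. exists alp. split; auto.
  intros x Hx. specialize (H x Hx). simpl in *. unfold R_dist in *. rewrite Hk0 in H.
  rewrite Rminus_0_r in H. pose proof (Rle_abs (k x)). specialize (Hb x). lra.
Qed.

Lemma inner_cont be mu (h : R -> R -> R) L Rr s x0 :
  (forall R1 R2 s1 s2, Rabs (h R2 s2 - h R1 s1) <= L * (Rabs (s2 - s1) + 2 * sqrt (Rabs (R2 - R1)))) ->
  continuous (fun x => gs be mu x * h (Rr - (x - mu)^2) (s - x)) x0.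
Proof.
  intro Hm.
  apply (continuous_mult (K := R_AbsRing) (gs be mu) (fun x => h (Rr - (x - mu)^2) (s - x))). apply gs_cont.
  apply continuity_pt_filterlim.
  apply squeeze_cont with (k := fun x => L * (Rabs (x0 - x) + 2 * sqrt (Rabs ((x0 - mu)^2 - (x - mu)^2)))).
  - intro x. eapply Rle_trans; [apply Hm|]. right.
    replace (s - x - (s - x0)) with (x0 - x) by ring.
    replace (Rr - (x - mu) ^ 2 - (Rr - (x0 - mu) ^ 2)) with ((x0 - mu)^2 - (x - mu)^2) by ring. reflexivity.
  - apply continuity_pt_filterlim.
    apply (continuous_mult (K := R_AbsRing) (fun _ => L) (fun x => Rabs (x0 - x) + 2 * sqrt (Rabs ((x0 - mu)^2 - (x - mu)^2)))).
    apply continuous_const.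
    apply (continuous_plus (V := R_NormedModule) (fun x => Rabs (x0 - x)) (fun x => 2 * sqrt (Rabs ((x0 - mu)^2 - (x - mu)^2)))).
    + apply continuous_Rabs_comp. apply continuity_pt_filterlim. reg.
    + apply (continuous_mult (K := R_AbsRing) (fun _ => 2) (fun x => sqrt (Rabs ((x0 - mu)^2 - (x - mu)^2)))). apply continuous_const.
      apply continuous_sqrt_comp. apply continuous_Rabs_comp. apply continuity_pt_filterlim. reg.
  - replace (x0 - x0) with 0 by ring. replace ((x0 - mu)^2 - (x0 - mu)^2) with 0 by ring.
    rewrite Rabs_R0. rewrite sqrt_0. ring.
Qed.

Lemma sq_lt_iff y r : 0 <= r -> (y ^ 2 < r ^ 2 <-> - r < y < r).
Proof. intro Hr. split; intro H. split; nra. nra. Qed.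

Lemma ilt_ball Rr x mu : ilt 0 (Rr - (x - mu) ^ 2) = ilt (mu - sqrt Rr) x * ilt x (mu + sqrt Rr).
Proof.
  unfold ilt. destruct (Rle_dec Rr 0) as [H|H].
  - rewrite sqrt_neg_0 by auto. pose proof (pow2_ge_0 (x - mu)).
    destruct (Rlt_dec 0 (Rr - (x - mu) ^ 2)); destruct (Rlt_dec (mu - 0) x); destruct (Rlt_dec x (mu + 0)); try lra.
  - assert (Hs : Rr = sqrt Rr ^ 2) by (rewrite <- Rsqr_pow2, Rsqr_sqrt; lra).
    pose proof (sqrt_pos Rr). pose proof (sq_lt_iff (x - mu) (sqrt Rr) (sqrt_pos Rr)).
    destruct (Rlt_dec 0 (Rr - (x - mu) ^ 2)); destruct (Rlt_dec (mu - sqrt Rr) x); destruct (Rlt_dec x (mu + sqrt Rr)); try lra;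
    exfalso; rewrite Hs in *; try (assert (- sqrt Rr < x - mu < sqrt Rr) by (apply H1; lra); lra);
    (assert ((x - mu) ^ 2 < sqrt Rr ^ 2) by (apply H1; lra); lra).
Qed.

Lemma ex_RInt_gs_c be mu c : forall lo hi, ex_RInt (fun x => gs be mu x * c) lo hi.
Proof.
  apply ex_RInt_cont. intro x. apply (continuous_mult (K := R_AbsRing) (gs be mu) (fun _ => c)). apply gs_cont. apply continuous_const.
Qed.

Lemma ex_RInt_ball be mu Rr c : forall lo hi, ex_RInt (fun x => gs be mu x * ilt 0 (Rr - (x - mu) ^ 2) * c) lo hi.
Proof.
  apply (ex_RInt_piece _ (fun _ => 0) (fun x => gs be mu x * ilt x (mu + sqrt Rr) * c) (mu - sqrt Rr)).
  - intros x Hx. rewrite ilt_ball. unfold ilt at 1. destruct (Rlt_dec (mu - sqrt Rr) x); [lra|ring].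
  - intros x Hx. rewrite ilt_ball. unfold ilt at 1. destruct (Rlt_dec (mu - sqrt Rr) x); [ring|lra].
  - apply ex_RInt_zero.
  - apply (ex_RInt_piece _ (fun x => gs be mu x * c) (fun _ => 0) (mu + sqrt Rr)).
    + intros x Hx. unfold ilt. destruct (Rlt_dec x (mu + sqrt Rr)); [ring|lra].
    + intros x Hx. unfold ilt. destruct (Rlt_dec x (mu + sqrt Rr)); [lra|ring].
    + apply ex_RInt_gs_c.
    + apply ex_RInt_zero.
Qed.

Lemma ex_RInt_base be mu Rr s ball dir : forall lo hi,
  ex_RInt (fun x => gs be mu x * Val 0 be mu (Rr - (x - mu) ^ 2) (s - x) ball dir) lo hi.
Proof.
  set (B := fun x => if ball then ilt 0 (Rr - (x - mu) ^ 2) else 1).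
  assert (EB : forall c lo hi, ex_RInt (fun x => gs be mu x * B x * c) lo hi).
  { intros c. unfold B. destruct ball. apply ex_RInt_ball.
    intros lo hi. eapply ex_RInt_ext; [|apply (ex_RInt_gs_c be mu c lo hi)]. intros; simpl; ring. }
  destruct dir.
  - apply (ex_RInt_piece _ (fun x => gs be mu x * B x * 1) (fun x => gs be mu x * B x * 0) s).
    + intros x Hx. rewrite Val0. unfold B, ilt. destruct (Rlt_dec 0 (s - x)); [|lra]. destruct ball; ring.
    + intros x Hx. rewrite Val0. unfold B, ilt. destruct (Rlt_dec 0 (s - x)); [lra|]. destruct ball; ring.
    + apply EB. + apply EB.
  - apply (ex_RInt_piece _ (fun x => gs be mu x * B x * 0) (fun x => gs be mu x * B x * 1) s).
    + intros x Hx. rewrite Val0. unfold B, ile. destruct (Rle_dec (s - x) 0); [lra|]. destruct ball; ring.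
    + intros x Hx. rewrite Val0. unfold B, ile. destruct (Rle_dec (s - x) 0); [|lra]. destruct ball; ring.
    + apply EB. + apply EB.
Qed.

Lemma inner_II_exists be mu (f : R -> R) c : 0 < be -> (forall lo hi, ex_RInt f lo hi) ->
  (forall x, 0 <= f x <= c * gs be mu x) -> exists l, II f l.
Proof.
  intros Hb Hex Hf.
  assert (Hc : 0 <= c). { destruct (Hf 0) as [H1 H2]. pose proof (gs_pos be mu 0). nra. }
  apply (II_exists f (c * Kg be)); auto. intro x; apply Hf.
  intros lo hi Hlh. apply Rle_trans with (RInt (fun x => c * gs be mu x) lo hi).
  - apply RInt_le; auto. apply ex_RInt_scalR. apply ex_RInt_cont; apply gs_cont. intros; apply Hf.
  - rewrite RInt_scalR by (apply ex_RInt_cont; apply gs_cont). apply Rmult_le_compat_l; auto.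
    apply II_RInt_le; auto. intro; left; apply gs_pos. apply II_gs; auto.
Qed.

Lemma Good_S be mu ball dir m : (forall Rr s, Good m (Term m be mu Rr s ball dir)) ->
  (forall Rr s, exists l, II (fun x => gs be mu x * Val m be mu (Rr - (x - mu) ^ 2) (s - x) ball dir) l) ->
  forall Rr s, Good (S m) (Term (S m) be mu Rr s ball dir) /\
    II (fun x => gs be mu x * Val m be mu (Rr - (x - mu) ^ 2) (s - x) ball dir) (Val (S m) be mu Rr s ball dir).
Proof.
  intros HG HI Rr s.
  assert (E : forall x, IntRM m (fun v => Term (S m) be mu Rr s ball dir (vcons x v)) =
                        gs be mu x * Val m be mu (Rr - (x - mu) ^ 2) (s - x) ball dir).
  { intro x. rewrite (IntRM_ext m _ (fun v => gs be mu x * Term m be mu (Rr - (x - mu) ^ 2) (s - x) ball dir v))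
      by (intro; apply Term_vcons). apply Good_scal. apply HG. }
  assert (HGS : Good (S m) (Term (S m) be mu Rr s ball dir)).
  { split. intro x. eapply Good_ext. intro v. symmetry. apply Term_vcons. apply Good_scal. apply HG.
    destruct (HI Rr s) as [l Hl]. exists l. eapply II_ext; [|exact Hl]. intro x; simpl. rewrite E; auto. }
  split; auto. pose proof (Good_II m _ HGS) as H. eapply II_ext; [|exact H]. intro x; simpl. apply E.
Qed.

Definition Jb (p q x : R) : R := ile p x * ile x q.
Definition Ob (p q x : R) : R := ilt p x * ilt x q.

Lemma II_Jb p q : p <= q -> II (Jb p q) (q - p).
Proof.
  intro H. apply II_box; auto; intros x Hx; unfold Jb, ile;
  repeat match goal with |- context [if ?c then _ else _] => destruct c end; lra.
Qed.

Lemma II_Ob p q : p <= q -> II (Ob p q) (q - p).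
Proof.
  intro H. apply II_box; auto; intros x Hx; unfold Ob, ilt;
  repeat match goal with |- context [if ?c then _ else _] => destruct c end; lra.
Qed.

Lemma sqrt_sub_le a b : a <= b -> sqrt b - sqrt a <= sqrt (b - a).
Proof.
  intro H. destruct (Rle_dec a 0) as [Ha|Ha].
  - rewrite (sqrt_neg_0 a Ha). pose proof (sqrt_le_1_alt b (b - a)). lra.
  - assert (sqrt b <= sqrt a + sqrt (b - a)); [|lra].
    pose proof (sqrt_pos a). pose proof (sqrt_pos (b - a)).
    apply Rsqr_incr_0_var; [|lra]. rewrite Rsqr_sqrt by lra. unfold Rsqr.
    replace ((sqrt a + sqrt (b - a)) * (sqrt a + sqrt (b - a))) with
      (sqrt a * sqrt a + sqrt (b - a) * sqrt (b - a) + 2 * sqrt a * sqrt (b - a)) by ring.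
    rewrite !sqrt_sqrt by lra. nra.
Qed.

Lemma Val1_II be mu ball dir : 0 < be -> forall Rr s,
  II (fun x => gs be mu x * Val 0 be mu (Rr - (x - mu) ^ 2) (s - x) ball dir) (Val 1 be mu Rr s ball dir).
Proof.
  intros Hb Rr s. apply (Good_S be mu ball dir 0); [intros; exact I|].
  intros Rr' s'. apply (inner_II_exists be mu _ 1 Hb). apply ex_RInt_base.
  intro x. pose proof (gs_pos be mu x). rewrite Val0. unfold ilt, ile.
  destruct ball; destruct dir; repeat match goal with |- context [if ?c then _ else _] => destruct c end; split; nra.
Qed.

Lemma diff_II (f g : R -> R) l l' : II f l -> II g l' -> II (fun x => f x + -1 * g x) (l - l').
Proof. intros H H'. replace (l - l') with (l + -1 * l') by ring. apply II_plus; auto. apply II_scal; auto. Qed.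

Lemma base_mod_s be mu ball dir Rr s1 s2 : 0 < be ->
  Rabs (Val 1 be mu Rr s2 ball dir - Val 1 be mu Rr s1 ball dir) <= Rabs (s2 - s1).
Proof.
  intro Hb.
  assert (K : forall s1 s2, s1 <= s2 -> Rabs (Val 1 be mu Rr s2 ball dir - Val 1 be mu Rr s1 ball dir) <= s2 - s1).
  { intros a c Hac. eapply II_abs_le; [| apply diff_II; apply Val1_II; auto | apply (II_Jb a c Hac)].
    intro x. simpl. pose proof (gs_pos be mu x). pose proof (gs_le1 be mu x (Rlt_le _ _ Hb)).
    rewrite !Val0. unfold Jb, ilt, ile. apply Rabs_le.
    destruct ball; destruct dir; repeat match goal with |- context [if ?c then _ else _] => destruct c end; split; lra. }
  destruct (Rle_dec s1 s2).
  - rewrite (Rabs_right (s2 - s1)) by lra. apply K; auto.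
  - rewrite Rabs_minus_sym, (Rabs_minus_sym s2). rewrite (Rabs_right (s1 - s2)) by lra. apply K; lra.
Qed.

Lemma base_mod_R be mu ball dir R1 R2 s : 0 < be ->
  Rabs (Val 1 be mu R2 s ball dir - Val 1 be mu R1 s ball dir) <= 2 * sqrt (Rabs (R2 - R1)).
Proof.
  intro Hb.
  assert (K : forall R1 R2, R1 <= R2 -> Rabs (Val 1 be mu R2 s ball dir - Val 1 be mu R1 s ball dir) <= 2 * sqrt (R2 - R1)).
  { intros a c Hac. destruct ball.
    - apply Rle_trans with (2 * sqrt c - 2 * sqrt a); [|pose proof (sqrt_sub_le a c Hac); lra].
      eapply II_abs_le; [| apply diff_II; apply Val1_II; auto |].
      2:{ replace (2 * sqrt c - 2 * sqrt a) with ((mu + sqrt c - (mu - sqrt c)) - (mu + sqrt a - (mu - sqrt a))) by ring.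
          apply diff_II. apply II_Jb. pose proof (sqrt_pos c); lra. apply II_Ob. pose proof (sqrt_pos a); lra. }
      intro x. cbv beta. pose proof (gs_pos be mu x). pose proof (gs_le1 be mu x (Rlt_le _ _ Hb)).
      rewrite !Val0.
      assert (I1 : ilt 0 (a - (x - mu) ^ 2) = Ob (mu - sqrt a) (mu + sqrt a) x) by apply ilt_ball.
      assert (I2 : ilt 0 (c - (x - mu) ^ 2) = Ob (mu - sqrt c) (mu + sqrt c) x) by apply ilt_ball.
      assert (OJ : Ob (mu - sqrt c) (mu + sqrt c) x <= Jb (mu - sqrt c) (mu + sqrt c) x).
      { unfold Ob, Jb, ilt, ile. repeat match goal with |- context [if ?c then _ else _] => destruct c end; lra. }
      assert (I12 : ilt 0 (a - (x - mu) ^ 2) <= ilt 0 (c - (x - mu) ^ 2)).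
      { unfold ilt. repeat match goal with |- context [if ?c then _ else _] => destruct c end; lra. }
      assert (B1 : ilt 0 (a - (x - mu) ^ 2) = 0 \/ ilt 0 (a - (x - mu) ^ 2) = 1) by (unfold ilt; destruct Rlt_dec; auto).
      assert (B2 : ilt 0 (c - (x - mu) ^ 2) = 0 \/ ilt 0 (c - (x - mu) ^ 2) = 1) by (unfold ilt; destruct Rlt_dec; auto).
      rewrite <- I1. revert OJ. rewrite <- I2. intro OJ.
      set (i1 := ilt 0 (a - (x - mu) ^ 2)) in *. set (i2 := ilt 0 (c - (x - mu) ^ 2)) in *.
      set (J := Jb (mu - sqrt c) (mu + sqrt c) x) in *.
      set (G := gs be mu x) in *.
      apply Rabs_le. destruct dir.
      + set (D := ilt 0 (s - x)). assert (D = 0 \/ D = 1) by (unfold D, ilt; destruct Rlt_dec; auto).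
        destruct B1 as [B1|B1]; destruct B2 as [B2|B2]; destruct H1 as [H1|H1]; rewrite ?B1, ?B2, ?H1 in *; split; lra.
      + set (D := ile (s - x) 0). assert (D = 0 \/ D = 1) by (unfold D, ile; destruct Rle_dec; auto).
        destruct B1 as [B1|B1]; destruct B2 as [B2|B2]; destruct H1 as [H1|H1]; rewrite ?B1, ?B2, ?H1 in *; split; lra.
    - assert (E : Val 1 be mu c s false dir = Val 1 be mu a s false dir).
      { apply (II_unique (fun x => gs be mu x * Val 0 be mu (c - (x - mu) ^ 2) (s - x) false dir)).
        apply Val1_II; auto. eapply II_ext; [|apply Val1_II; auto]. intro x. simpl. rewrite !Val0. reflexivity. }
      rewrite E. replace (Val 1 be mu a s false dir - Val 1 be mu a s false dir) with 0 by ring.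
      rewrite Rabs_R0. pose proof (sqrt_pos (c - a)). lra. }
  destruct (Rle_dec R1 R2).
  - rewrite (Rabs_right (R2 - R1)) by lra. apply K; auto.
  - rewrite Rabs_minus_sym, (Rabs_minus_sym R2). rewrite (Rabs_right (R1 - R2)) by lra. apply K; lra.
Qed.

Lemma base_mod be mu ball dir R1 R2 s1 s2 : 0 < be ->
  Rabs (Val 1 be mu R2 s2 ball dir - Val 1 be mu R1 s1 ball dir) <= Rabs (s2 - s1) + 2 * sqrt (Rabs (R2 - R1)).
Proof.
  intro Hb. replace (Val 1 be mu R2 s2 ball dir - Val 1 be mu R1 s1 ball dir) with
    ((Val 1 be mu R2 s2 ball dir - Val 1 be mu R2 s1 ball dir) + (Val 1 be mu R2 s1 ball dir - Val 1 be mu R1 s1 ball dir)) by ring.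
  eapply Rle_trans; [apply Rabs_triang|]. apply Rplus_le_compat. apply base_mod_s; auto. apply base_mod_R; auto.
Qed.

Lemma Term_main be mu ball dir : 0 < be -> forall m,
  (forall Rr s, Good m (Term m be mu Rr s ball dir)) /\
  (forall Rr s, 0 <= Val m be mu Rr s ball dir <= Kg be ^ m) /\
  (forall Rr s, II (fun x => gs be mu x * Val m be mu (Rr - (x - mu) ^ 2) (s - x) ball dir) (Val (S m) be mu Rr s ball dir)) /\
  (forall R1 R2 s1 s2, Rabs (Val (S m) be mu R2 s2 ball dir - Val (S m) be mu R1 s1 ball dir) <=
      Kg be ^ m * (Rabs (s2 - s1) + 2 * sqrt (Rabs (R2 - R1)))).
Proof.
  intros Hb m. pose proof (Kg_nonneg be Hb) as HK.
  induction m as [|m [IG [IB [II_ IM]]]].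
  - split; [intros; exact I|]. split.
    + intros Rr s. rewrite Val0. unfold ilt, ile. simpl.
      destruct ball; destruct dir; repeat match goal with |- context [if ?c then _ else _] => destruct c end; split; lra.
    + split. apply Val1_II; auto. intros. rewrite pow_O, Rmult_1_l. apply base_mod; auto.
  - assert (GS : forall Rr s, Good (S m) (Term (S m) be mu Rr s ball dir)).
    { intros Rr s. apply (Good_S be mu ball dir m IG). intros; eexists; apply II_. }
    assert (BS : forall Rr s, 0 <= Val (S m) be mu Rr s ball dir <= Kg be ^ S m).
    { intros Rr s. split.
      - eapply II_nonneg; [|apply II_]. intro x. apply Rmult_le_pos. left; apply gs_pos. apply IB.
      - replace (Kg be ^ S m) with (Kg be ^ m * Kg be) by (simpl; ring).
        apply (II_le (fun x => gs be mu x * Val m be mu (Rr - (x - mu) ^ 2) (s - x) ball dir) (fun x => Kg be ^ m * gs be mu x)); [| apply II_ | apply II_scal; apply II_gs; auto].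
        intro x. pose proof (gs_pos be mu x). pose proof (IB (Rr - (x - mu) ^ 2) (s - x)). nra. }
    assert (IS : forall Rr s, II (fun x => gs be mu x * Val (S m) be mu (Rr - (x - mu) ^ 2) (s - x) ball dir) (Val (S (S m)) be mu Rr s ball dir)).
    { apply (Good_S be mu ball dir (S m) GS). intros Rr s.
      apply (inner_II_exists be mu _ (Kg be ^ S m) Hb).
      - apply ex_RInt_cont. intro x0. apply (inner_cont be mu (fun R s => Val (S m) be mu R s ball dir) (Kg be ^ m)). apply IM.
      - intro x. pose proof (gs_pos be mu x). pose proof (BS (Rr - (x - mu) ^ 2) (s - x)). split; nra. }
    split; auto. split; auto. split; auto.
    intros R1 R2 s1 s2.
    replace (Kg be ^ S m * (Rabs (s2 - s1) + 2 * sqrt (Rabs (R2 - R1)))) with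
      (Kg be ^ m * (Rabs (s2 - s1) + 2 * sqrt (Rabs (R2 - R1))) * Kg be) by (simpl; ring).
    eapply II_abs_le; [| apply diff_II; apply IS | apply II_scal; apply II_gs; auto].
    intro x. cbv beta. pose proof (gs_pos be mu x).
    pose proof (IM (R1 - (x - mu) ^ 2) (R2 - (x - mu) ^ 2) (s1 - x) (s2 - x)) as HH.
    replace (R2 - (x - mu) ^ 2 - (R1 - (x - mu) ^ 2)) with (R2 - R1) in HH by ring.
    replace (s2 - x - (s1 - x)) with (s2 - s1) in HH by ring.
    replace (gs be mu x * Val (S m) be mu (R2 - (x - mu) ^ 2) (s2 - x) ball dir +
      -1 * (gs be mu x * Val (S m) be mu (R1 - (x - mu) ^ 2) (s1 - x) ball dir)) with
      (gs be mu x * (Val (S m) be mu (R2 - (x - mu) ^ 2) (s2 - x) ball dir - Val (S m) be mu (R1 - (x - mu) ^ 2) (s1 - x) ball dir)) by ring.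
    rewrite Rabs_mult, (Rabs_right (gs be mu x)) by lra.
    rewrite Rmult_comm. apply Rmult_le_compat_r; lra.
Qed.

Lemma Term_Good be mu ball dir m Rr s : 0 < be -> Good m (Term m be mu Rr s ball dir).
Proof. intro Hb. apply (Term_main be mu ball dir Hb m). Qed.

Lemma Val_II be mu ball dir m Rr s : 0 < be ->
  II (fun x => gs be mu x * Val m be mu (Rr - (x - mu) ^ 2) (s - x) ball dir) (Val (S m) be mu Rr s ball dir).
Proof. intro Hb. apply (Term_main be mu ball dir Hb m). Qed.

Definition U (m : nat) (t : R) : R := Val m 1 0 0 t false true.

Lemma Val_noball m be mu Rr Rr' s dir : Val m be mu Rr s false dir = Val m be mu Rr' s false dir.
Proof. reflexivity. Qed.

Lemma U_II m t : II (fun y => gs 1 0 y * U m (t - y)) (U (S m) t).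
Proof. unfold U. apply (Val_II 1 0 false true m 0 t). lra. Qed.

Lemma Val_scale be mu m : 0 < be -> forall Rr s,
  Val m be mu Rr s false true = (/ sqrt be) ^ m * U m (sqrt be * (s - INR m * mu)).
Proof.
  intro Hb. pose proof (sqrt_lt_R0 be Hb) as Hs.
  induction m as [|m IH]; intros Rr s.
  - unfold U. rewrite !Val0. simpl. unfold ilt.
    destruct (Rlt_dec 0 s); destruct (Rlt_dec 0 (sqrt be * (s - 0 * mu))); try ring; exfalso; nra.
  - set (t := sqrt be * (s - INR (S m) * mu)).
    pose proof (II_lin _ _ (sqrt be) (- (sqrt be * mu)) Hs (U_II m t)) as H1.
    apply (II_scal ((/ sqrt be) ^ m)) in H1.
    apply (II_unique (fun x => gs be mu x * Val m be mu (Rr - (x - mu) ^ 2) (s - x) false true)).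
    apply Val_II; auto.
    eapply II_ext; [|replace ((/ sqrt be) ^ S m * U (S m) t) with ((/ sqrt be) ^ m * (U (S m) t / sqrt be)) by (simpl; field; lra); exact H1].
    intro x. cbv beta. rewrite IH. rewrite <- gs_scale by auto. unfold t. rewrite S_INR.
    replace (sqrt be * (s - (INR m + 1) * mu) - (sqrt be * x + - (sqrt be * mu))) with (sqrt be * (s - x - INR m * mu)) by ring.
    ring.
Qed.

Lemma gs_opp be mu x : gs be (- mu) (- x) = gs be mu x.
Proof. unfold gs. f_equal. ring. Qed.

Lemma Val_refl be mu m : 0 < be -> (1 <= m)%nat -> forall Rr s,
  Val m be mu Rr s false false = Val m be (- mu) Rr (- s) false true.
Proof.
  intros Hb Hm. induction m as [|m IH]; [lia|]. intros Rr s.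
  apply (II_unique (fun x => gs be mu x * Val m be mu (Rr - (x - mu) ^ 2) (s - x) false false)).
  apply Val_II; auto.
  pose proof (II_opp _ _ (Val_II be (-mu) false true m Rr (-s) Hb)) as H. cbv beta in H.
  destruct m as [|m].
  - refine (II_onepoint _ _ _ s _ H). intros x Hx. rewrite !Val0, gs_opp. unfold ilt, ile.
    apply Rdichotomy in Hx.
    destruct (Rlt_dec 0 (- s - - x)); destruct (Rle_dec (s - x) 0); try ring; lra.
  - eapply II_ext; [|exact H]. intro x. cbv beta. rewrite gs_opp. rewrite IH by lia.
    replace (- s - - x) with (- (s - x)) by ring. reflexivity.
Qed.

Lemma U_mono m : forall t t', t <= t' -> U m t <= U m t'.
Proof.
  induction m as [|m IH]; intros t t' H.
  - unfold U. rewrite !Val0. unfold ilt. destruct (Rlt_dec 0 t); destruct (Rlt_dec 0 t'); lra.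
  - apply (II_le _ _ _ _ (fun x => Rmult_le_compat_l _ _ _ (Rlt_le _ _ (gs_pos 1 0 x)) (IH (t - x) (t' - x) ltac:(lra)))
      (U_II m t) (U_II m t')).
Qed.

Lemma II_ex_RInt (f : R -> R) l a b : II f l -> a <= b -> ex_RInt f a b.
Proof.
  intros H Hab. destruct (H 1 Rlt_0_1) as [T [HT0 HT]].
  set (lo := Rmin a (-T)). set (hi := Rmax b T).
  pose proof (Rmin_l a (-T)). pose proof (Rmin_r a (-T)). pose proof (Rmax_l b T). pose proof (Rmax_r b T).
  destruct (HT lo hi) as [E _]; try (unfold lo, hi; lra).
  apply (ex_RInt_Chasles_2 f lo a b). unfold lo, hi in *; lra.
  apply (ex_RInt_Chasles_1 f lo b hi). unfold lo, hi in *; lra. exact E.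
Qed.

Lemma II_pos_lb (f : R -> R) l a c : II f l -> (forall x, 0 <= f x) -> (forall x, a < x < a + 1 -> c <= f x) -> c <= l.
Proof.
  intros H Hp Hc. apply Rle_trans with (RInt f a (a + 1)).
  - apply Rle_trans with (RInt (fun _ => c) a (a + 1)).
    + rewrite RInt_const. change (scal (a + 1 - a) c) with ((a + 1 - a) * c). lra.
    + apply RInt_le. lra. apply ex_RInt_const. apply (II_ex_RInt f l); auto; lra. intros; apply Hc; auto.
  - apply II_RInt_le; auto. lra.
Qed.

Lemma gs_lb t y : Rabs (y - t) <= 1 -> exp (- (1/2) * (Rabs t + 1) ^ 2) <= gs 1 0 y.
Proof.
  intro H. unfold gs. apply exp_le_3 || idtac.
  destruct (Req_dec (- (1 / 2) * (Rabs t + 1) ^ 2) (- (1 / 2) * (y - 0) ^ 2)) as [E|E]. rewrite E; lra.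
  left. apply exp_increasing.
  apply Rabs_le_inv in H. pose proof (Rle_abs t). pose proof (Rle_abs (-t)). rewrite Rabs_Ropp in *.
  assert ((y - 0) ^ 2 <= (Rabs t + 1) ^ 2) by nra. lra.
Qed.

Lemma U_pos m : (1 <= m)%nat -> forall t, 0 < U m t.
Proof.
  intro Hm. induction m as [|m IH]; [lia|]. intro t.
  assert (Hc : 0 < exp (- (1/2) * (Rabs t + 1) ^ 2)) by apply exp_pos.
  destruct m as [|m].
  - apply Rlt_le_trans with (exp (- (1/2) * (Rabs t + 1) ^ 2)); auto.
    apply (II_pos_lb _ _ (t - 1) _ (U_II 0 t)).
    + intro x. unfold U. rewrite Val0. pose proof (gs_pos 1 0 x). unfold ilt. destruct Rlt_dec; nra.
    + intros x Hx. unfold U. rewrite Val0. unfold ilt. destruct (Rlt_dec 0 (t - x)); [|lra].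
      rewrite !Rmult_1_l, Rmult_1_r. apply gs_lb. apply Rabs_le; lra.
  - assert (HU : 0 < U (S m) (-1)) by (apply IH; lia).
    apply Rlt_le_trans with (exp (- (1/2) * (Rabs t + 1) ^ 2) * U (S m) (-1)). nra.
    apply (II_pos_lb _ _ t _ (U_II (S m) t)).
    + intro x. pose proof (gs_pos 1 0 x). pose proof (IH ltac:(lia) (t - x)). nra.
    + intros x Hx. apply Rmult_le_compat; try lra. apply gs_lb. apply Rabs_le; lra. apply U_mono. lra.
Qed.

Definition K0 (M : nat) : R := / Rpower (2 * PI) (INR M / 2).
Definition Gb (M : nat) (b be : R) : R := Val M be (- b) 0 0 false true.

Lemma K0_pos M : 0 < K0 M.
Proof. unfold K0, Rpower. apply Rinv_0_lt_compat, exp_pos. Qed.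

Lemma Gb_pos M b be : (1 <= M)%nat -> 0 < be -> 0 < Gb M b be.
Proof.
  intros HM Hb. unfold Gb. rewrite Val_scale by auto. apply Rmult_lt_0_compat.
  apply pow_lt. apply Rinv_0_lt_compat, sqrt_lt_R0; auto. apply U_pos; auto.
Qed.

Lemma Val_b_ge M b be : (1 <= M)%nat -> 0 < be -> Val M be b 0 0 false false = Gb M b be.
Proof. intros HM Hb. rewrite Val_refl by auto. rewrite Ropp_0. reflexivity. Qed.

Lemma Gb_ratio M b be1 be2 : (1 <= M)%nat -> 0 < b -> 0 < be1 -> be1 <= be2 ->
  (sqrt be1 / sqrt be2) ^ M * Gb M b be1 <= Gb M b be2.
Proof.
  intros HM Hb H1 H12. unfold Gb. rewrite !Val_scale by lra.
  pose proof (sqrt_lt_R0 be1 H1). assert (0 < sqrt be2) by (apply sqrt_lt_R0; lra).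
  replace ((sqrt be1 / sqrt be2) ^ M * ((/ sqrt be1) ^ M * U M (sqrt be1 * (0 - INR M * - b))))
    with ((/ sqrt be2) ^ M * U M (sqrt be1 * (0 - INR M * - b))).
  2:{ rewrite <- Rmult_assoc, <- Rpow_mult_distr.
        replace (sqrt be1 / sqrt be2 * / sqrt be1) with (/ sqrt be2) by (field; lra). reflexivity. }
  apply Rmult_le_compat_l. apply pow_le. left; apply Rinv_0_lt_compat; auto.
  apply U_mono. assert (0 <= INR M * b) by (apply Rmult_le_pos; [apply pos_INR|lra]).
  replace (0 - INR M * - b) with (INR M * b) by ring. apply Rmult_le_compat_r; auto. apply sqrt_le_1_alt; auto.
Qed.

Lemma pitilde_un_eq M b a z : pitilde_un M b a z =
  (a * K0 M) * Term M 1 (- b) 0 0 false true z + ((1 - a) * K0 M) * Term M 1 b 0 0 false false z.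
Proof. unfold pitilde_un, normal_iso, indA, Term, sq, ilt, ile, K0. cbv beta. ring. Qed.

Lemma Z_eq M b a : (1 <= M)%nat -> IntRM M (pitilde_un M b a) = K0 M * Gb M b 1.
Proof.
  intro HM. rewrite (IntRM_ext M _ _ (pitilde_un_eq M b a)).
  assert (G1 : Good M (Term M 1 (- b) 0 0 false true)) by (apply Term_Good; lra).
  assert (G2 : Good M (Term M 1 b 0 0 false false)) by (apply Term_Good; lra).
  destruct (Good_scal M (a * K0 M) _ G1) as [G1' E1].
  destruct (Good_scal M ((1 - a) * K0 M) _ G2) as [G2' E2].
  rewrite (proj2 (Good_plus M _ _ G1' G2')), E1, E2.
  change (IntRM M (Term M 1 (- b) 0 0 false true)) with (Gb M b 1).
  change (IntRM M (Term M 1 b 0 0 false false)) with (Val M 1 b 0 0 false false).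
  rewrite Val_b_ge by (auto; lra). ring.
Qed.

Definition Zc M b a := IntRM M (pitilde_un M b a).
Definition al1 M b a be := exp (be * ln (a * K0 M / Zc M b a)).
Definition al2 M b a be := exp (be * ln ((1 - a) * K0 M / Zc M b a)).

Lemma Zc_pos M b a : (1 <= M)%nat -> 0 < b -> 0 < Zc M b a.
Proof. intros HM Hb. unfold Zc. rewrite Z_eq by auto. apply Rmult_lt_0_compat. apply K0_pos. apply Gb_pos; auto; lra. Qed.

Lemma exp_ln_mult_exp x y be : 0 < x -> exp (be * ln (x * exp y)) = exp (be * ln x) * exp (be * y).
Proof. intro Hx. rewrite ln_mult by (auto; apply exp_pos). rewrite ln_exp, <- exp_plus. f_equal. ring. Qed.

Lemma rp_eq M b a be z : (1 <= M)%nat -> 0 < b -> 0 < a < 1 ->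
  Rpower (pitilde M b a z) be = al1 M b a be * Term M be (- b) 0 0 false true z + al2 M b a be * Term M be b 0 0 false false z.
Proof.
  intros HM Hb Ha. pose proof (Zc_pos M b a HM Hb) as HZ. pose proof (K0_pos M) as HK.
  unfold pitilde, Rpower. rewrite pitilde_un_eq. fold (Zc M b a). unfold al1, al2, Term, sq, ilt, ile.
  destruct (Rlt_dec (sumM M z) 0); destruct (Rle_dec 0 (sumM M z)); try lra.
  - replace ((a * K0 M * (exp (- (1 / 2) * sumM M (fun i : nat => (z i - - b) ^ 2)) * 1 * 1) +
      (1 - a) * K0 M * (exp (- (1 / 2) * sumM M (fun i : nat => (z i - b) ^ 2)) * 1 * 0)) / Zc M b a)
      with (a * K0 M / Zc M b a * exp (- (1 / 2) * sumM M (fun i : nat => (z i - - b) ^ 2))) by (field; lra).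
    rewrite exp_ln_mult_exp. replace (be * (- (1 / 2) * sumM M (fun i : nat => (z i - - b) ^ 2))) with
      (- (be / 2) * sumM M (fun i : nat => (z i - - b) ^ 2)) by field. ring.
    apply Rdiv_lt_0_compat; [nra|lra].
  - replace ((a * K0 M * (exp (- (1 / 2) * sumM M (fun i : nat => (z i - - b) ^ 2)) * 1 * 0) +
      (1 - a) * K0 M * (exp (- (1 / 2) * sumM M (fun i : nat => (z i - b) ^ 2)) * 1 * 1)) / Zc M b a)
      with ((1 - a) * K0 M / Zc M b a * exp (- (1 / 2) * sumM M (fun i : nat => (z i - b) ^ 2))) by (field; lra).
    rewrite exp_ln_mult_exp. replace (be * (- (1 / 2) * sumM M (fun i : nat => (z i - b) ^ 2))) with
      (- (be / 2) * sumM M (fun i : nat => (z i - b) ^ 2)) by field. ring.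
    apply Rdiv_lt_0_compat; [nra|lra].
Qed.

Definition Wc M b a be := IntRM M (fun y => Rpower (pitilde M b a y) be).

Lemma Good2 M b be c1 c2 : 0 < be -> Good M (fun z => c1 * Term M be (- b) 0 0 false true z + c2 * Term M be b 0 0 false false z) /\
  IntRM M (fun z => c1 * Term M be (- b) 0 0 false true z + c2 * Term M be b 0 0 false false z) =
  c1 * Val M be (- b) 0 0 false true + c2 * Val M be b 0 0 false false.
Proof.
  intro Hb.
  destruct (Good_scal M c1 _ (Term_Good be (-b) false true M 0 0 Hb)) as [G1 E1].
  destruct (Good_scal M c2 _ (Term_Good be b false false M 0 0 Hb)) as [G2 E2].
  destruct (Good_plus M _ _ G1 G2) as [G E]. split; auto. rewrite E, E1, E2. reflexivity.
Qed.

Lemma Wc_eq M b a be : (1 <= M)%nat -> 0 < b -> 0 < a < 1 -> 0 < be ->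
  Wc M b a be = (al1 M b a be + al2 M b a be) * Gb M b be.
Proof.
  intros HM Hb Ha Hbe. unfold Wc. rewrite (IntRM_ext M _ _ (fun z => rp_eq M b a be z HM Hb Ha)).
  rewrite (proj2 (Good2 M b be _ _ Hbe)). rewrite Val_b_ge by auto. unfold Gb. ring.
Qed.

Lemma al_pos M b a be : 0 < al1 M b a be /\ 0 < al2 M b a be.
Proof. split; apply exp_pos. Qed.

Lemma Wc_pos M b a be : (1 <= M)%nat -> 0 < b -> 0 < a < 1 -> 0 < be -> 0 < Wc M b a be.
Proof.
  intros. rewrite Wc_eq by auto. pose proof (al_pos M b a be). apply Rmult_lt_0_compat. lra. apply Gb_pos; auto.
Qed.

Lemma pi_temp_eq M b a be z : (1 <= M)%nat -> 0 < b -> 0 < a < 1 ->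
  pi_temp M b a be z = (al1 M b a be * Term M be (- b) 0 0 false true z + al2 M b a be * Term M be b 0 0 false false z) / Wc M b a be.
Proof. intros. unfold pi_temp. rewrite rp_eq by auto. reflexivity. Qed.

Definition c1 M b a be := al1 M b a be / Wc M b a be.
Definition c2 M b a be := al2 M b a be / Wc M b a be.

Lemma prob1_eq M b a be : (1 <= M)%nat -> 0 < b -> 0 < a < 1 -> 0 < be ->
  prob M b a be 1 = c1 M b a be * Gb M b be.
Proof.
  intros HM Hb Ha Hbe. unfold prob. pose proof (Wc_pos M b a be HM Hb Ha Hbe).
  rewrite (IntRM_ext M _ (fun z => c1 M b a be * Term M be (- b) 0 0 false true z + 0 * Term M be b 0 0 false false z)).
  rewrite (proj2 (Good2 M b be _ _ Hbe)). unfold Gb; ring.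
  intro z. rewrite pi_temp_eq by auto. unfold c1, indA, Term, ilt, ile.
  destruct (Rlt_dec (sumM M z) 0); destruct (Rle_dec 0 (sumM M z)); try lra; field; lra.
Qed.

Lemma prob2_eq M b a be : (1 <= M)%nat -> 0 < b -> 0 < a < 1 -> 0 < be ->
  prob M b a be 2 = c2 M b a be * Gb M b be.
Proof.
  intros HM Hb Ha Hbe. unfold prob. pose proof (Wc_pos M b a be HM Hb Ha Hbe).
  rewrite (IntRM_ext M _ (fun z => 0 * Term M be (- b) 0 0 false true z + c2 M b a be * Term M be b 0 0 false false z)).
  rewrite (proj2 (Good2 M b be _ _ Hbe)). rewrite Val_b_ge by auto. ring.
  intro z. rewrite pi_temp_eq by auto. unfold c2, indA, Term, ilt, ile.
  destruct (Rlt_dec (sumM M z) 0); destruct (Rle_dec 0 (sumM M z)); try lra; field; lra.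
Qed.

Definition pp (L be : R) : R := 1 / (1 + exp (- (be * L))).
Definition qq (L be : R) : R := 1 / (1 + exp (be * L)).
Definition La (a : R) : R := ln a - ln (1 - a).

Lemma ln_wKZ w K Z : 0 < w -> 0 < K -> 0 < Z -> ln (w * K / Z) = ln w + ln (K / Z).
Proof. intros. unfold Rdiv. rewrite Rmult_assoc. apply ln_mult; auto. apply Rmult_lt_0_compat; auto. apply Rinv_0_lt_compat; auto. Qed.

Lemma exp_minus_div x y : exp (x - y) = exp x / exp y.
Proof. unfold Rminus, Rdiv. rewrite exp_plus, exp_Ropp. reflexivity. Qed.

Lemma prob1_pp M b a be : (1 <= M)%nat -> 0 < b -> 0 < a < 1 -> 0 < be -> prob M b a be 1 = pp (La a) be.
Proof.
  intros HM Hb Ha Hbe. rewrite prob1_eq by auto. unfold c1. rewrite Wc_eq by auto.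
  pose proof (Gb_pos M b be HM Hbe). pose proof (Zc_pos M b a HM Hb). pose proof (K0_pos M).
  unfold pp, La, al1, al2. rewrite !ln_wKZ by lra.
  replace (- (be * (ln a - ln (1 - a)))) with (be * (ln (1 - a) + ln (K0 M / Zc M b a)) - be * (ln a + ln (K0 M / Zc M b a))) by ring.
  rewrite exp_minus_div. pose proof (exp_pos (be * (ln a + ln (K0 M / Zc M b a)))).
  pose proof (exp_pos (be * (ln (1 - a) + ln (K0 M / Zc M b a)))). field. split; lra.
Qed.

Lemma prob2_qq M b a be : (1 <= M)%nat -> 0 < b -> 0 < a < 1 -> 0 < be -> prob M b a be 2 = qq (La a) be.
Proof.
  intros HM Hb Ha Hbe. rewrite prob2_eq by auto. unfold c2. rewrite Wc_eq by auto.
  pose proof (Gb_pos M b be HM Hbe). pose proof (Zc_pos M b a HM Hb). pose proof (K0_pos M).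
  unfold qq, La, al1, al2. rewrite !ln_wKZ by lra.
  replace (be * (ln a - ln (1 - a))) with (be * (ln a + ln (K0 M / Zc M b a)) - be * (ln (1 - a) + ln (K0 M / Zc M b a))) by ring.
  rewrite exp_minus_div. pose proof (exp_pos (be * (ln a + ln (K0 M / Zc M b a)))).
  pose proof (exp_pos (be * (ln (1 - a) + ln (K0 M / Zc M b a)))). field. split; lra.
Qed.

Lemma sq_nonneg m mu v : 0 <= sq m mu v.
Proof.
  unfold sq. induction m as [|m IH]. simpl; lra.
  replace (sumM (S m) (fun i => (v i - mu)^2)) with (sumM m (fun i => (v i - mu)^2) + (v m - mu)^2) by reflexivity.
  pose proof (pow2_ge_0 (v m - mu)). lra.
Qed.

Definition Dd (M : nat) (dir : bool) (z : nat -> R) : R := if dir then ilt (sumM M z) 0 else ile 0 (sumM M z).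

Lemma min_split be1 be2 k1 k2 u : 0 < be1 < be2 -> 0 < k1 -> 0 < k2 ->
  Rmin (k1 * exp (- (be1 / 2) * u)) (k2 * exp (- (be2 / 2) * u)) =
  if Rlt_dec u (2 * (ln k2 - ln k1) / (be2 - be1)) then k1 * exp (- (be1 / 2) * u) else k2 * exp (- (be2 / 2) * u).
Proof.
  intros Hb H1 H2.
  assert (E1 : k1 * exp (- (be1 / 2) * u) = exp (ln k1 + - (be1 / 2) * u)) by (rewrite exp_plus, exp_ln; auto).
  assert (E2 : k2 * exp (- (be2 / 2) * u) = exp (ln k2 + - (be2 / 2) * u)) by (rewrite exp_plus, exp_ln; auto).
  rewrite E1, E2.
  destruct (Rlt_dec u (2 * (ln k2 - ln k1) / (be2 - be1))) as [H|H].
  - apply Rmin_left. left. apply exp_increasing.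
    apply Rmult_lt_compat_r with (r := be2 - be1) in H; [|lra].
    replace (2 * (ln k2 - ln k1) / (be2 - be1) * (be2 - be1)) with (2 * (ln k2 - ln k1)) in H by (field; lra). nra.
  - apply Rmin_right. apply Rnot_lt_le in H.
    apply Rmult_le_compat_r with (r := be2 - be1) in H; [|lra].
    replace (2 * (ln k2 - ln k1) / (be2 - be1) * (be2 - be1)) with (2 * (ln k2 - ln k1)) in H by (field; lra).
    destruct (Req_dec (ln k2 + - (be2 / 2) * u) (ln k1 + - (be1 / 2) * u)) as [E|E]. rewrite E; lra.
    left. apply exp_increasing. nra.
Qed.

Definition MinF M mu dir be1 be2 k1 k2 (z : nat -> R) : R :=
  Dd M dir z * Rmin (k1 * exp (- (be1 / 2) * sq M mu z)) (k2 * exp (- (be2 / 2) * sq M mu z)).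

Lemma min_Good_lt M mu dir be1 be2 k1 k2 : 0 < be1 < be2 -> 0 < k1 -> 0 < k2 -> Good M (MinF M mu dir be1 be2 k1 k2).
Proof.
  intros Hb H1 H2. set (S0 := 2 * (ln k2 - ln k1) / (be2 - be1)).
  assert (GA : Good M (Term M be1 mu S0 0 true dir)) by (apply Term_Good; lra).
  assert (GB : Good M (Term M be2 mu 0 0 false dir)) by (apply Term_Good; lra).
  assert (GC : Good M (Term M be2 mu S0 0 true dir)) by (apply Term_Good; lra).
  apply (Good_scal M k1) in GA. apply (Good_scal M k2) in GB. apply (Good_scal M (- k2)) in GC.
  destruct (Good_plus M _ _ (proj1 GA) (proj1 GB)) as [GAB _].
  destruct (Good_plus M _ _ GAB (proj1 GC)) as [G _].
  eapply Good_ext; [|exact G]. intro z. cbv beta. unfold MinF. rewrite min_split by auto. fold S0.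
  unfold Dd, Term, ilt, ile.
  destruct (Rlt_dec (sq M mu z) S0); destruct dir; ring.
Qed.

Lemma min_Good M mu dir be1 be2 k1 k2 : 0 < be1 -> 0 < be2 -> be1 <> be2 -> 0 < k1 -> 0 < k2 -> Good M (MinF M mu dir be1 be2 k1 k2).
Proof.
  intros Hb1 Hb2 Hne H1 H2. destruct (Rlt_dec be1 be2).
  - apply min_Good_lt; auto.
  - eapply Good_ext; [|apply (min_Good_lt M mu dir be2 be1 k2 k1); auto; lra].
    intro z. unfold MinF. rewrite Rmin_comm. reflexivity.
Qed.

Lemma min_lb M mu dir be1 be2 k1 k2 : 0 < be1 -> 0 < be2 -> be1 <> be2 -> 0 < k1 -> 0 < k2 ->
  Rmin k1 k2 * Val M (Rmax be1 be2) mu 0 0 false dir <= IntRM M (MinF M mu dir be1 be2 k1 k2).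
Proof.
  intros Hb1 Hb2 Hne H1 H2. unfold Val.
  rewrite <- (proj2 (Good_scal M (Rmin k1 k2) _ (Term_Good (Rmax be1 be2) mu false dir M 0 0 ltac:(apply Rlt_le_trans with be1; [lra|apply Rmax_l])))).
  apply Good_mono. apply Good_scal. apply Term_Good. apply Rlt_le_trans with be1; [lra|apply Rmax_l].
  apply min_Good; auto.
  intro z. unfold MinF, Term, Dd. pose proof (sq_nonneg M mu z) as Hs.
  set (u := sq M mu z) in *.
  assert (E1 : exp (- (Rmax be1 be2 / 2) * u) <= exp (- (be1 / 2) * u)).
  { destruct (Req_dec (- (Rmax be1 be2 / 2) * u) (- (be1 / 2) * u)) as [E|E]. rewrite E; lra.
    left; apply exp_increasing. pose proof (Rmax_l be1 be2). nra. }
  assert (E2 : exp (- (Rmax be1 be2 / 2) * u) <= exp (- (be2 / 2) * u)).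
  { destruct (Req_dec (- (Rmax be1 be2 / 2) * u) (- (be2 / 2) * u)) as [E|E]. rewrite E; lra.
    left; apply exp_increasing. pose proof (Rmax_r be1 be2). nra. }
  pose proof (exp_pos (- (Rmax be1 be2 / 2) * u)).
  assert (Rmin k1 k2 * exp (- (Rmax be1 be2 / 2) * u) <= Rmin (k1 * exp (- (be1 / 2) * u)) (k2 * exp (- (be2 / 2) * u))).
  { apply Rmin_glb.
    - apply Rle_trans with (k1 * exp (- (Rmax be1 be2 / 2) * u)). apply Rmult_le_compat_r; [lra|apply Rmin_l]. apply Rmult_le_compat_l; lra.
    - apply Rle_trans with (k2 * exp (- (Rmax be1 be2 / 2) * u)). apply Rmult_le_compat_r; [lra|apply Rmin_r]. apply Rmult_le_compat_l; lra. }
  destruct dir; unfold ilt, ile; repeat match goal with |- context [if ?c then _ else _] => destruct c end; nra.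
Qed.

Lemma pi_temp_lt M b a be z : (1 <= M)%nat -> 0 < b -> 0 < a < 1 -> sumM M z < 0 ->
  pi_temp M b a be z = c1 M b a be * exp (- (be / 2) * sq M (- b) z).
Proof.
  intros. rewrite pi_temp_eq by auto. unfold c1, Term, ilt, ile.
  destruct (Rlt_dec (sumM M z) 0); destruct (Rle_dec 0 (sumM M z)); try lra; try (unfold Rdiv; ring).
Qed.

Lemma pi_temp_ge M b a be z : (1 <= M)%nat -> 0 < b -> 0 < a < 1 -> 0 <= sumM M z ->
  pi_temp M b a be z = c2 M b a be * exp (- (be / 2) * sq M b z).
Proof.
  intros. rewrite pi_temp_eq by auto. unfold c2, Term, ilt, ile.
  destruct (Rlt_dec (sumM M z) 0); destruct (Rle_dec 0 (sumM M z)); try lra; try (unfold Rdiv; ring).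
Qed.

Lemma c_pos M b a be : (1 <= M)%nat -> 0 < b -> 0 < a < 1 -> 0 < be -> 0 < c1 M b a be /\ 0 < c2 M b a be.
Proof.
  intros. pose proof (Wc_pos M b a be) as HW. pose proof (al_pos M b a be). unfold c1, c2.
  split; apply Rdiv_lt_0_compat; try lra; apply HW; auto.
Qed.

Lemma overlap_lb1 M b a bk bl : (1 <= M)%nat -> 0 < b -> 0 < a < 1 -> 0 < bk -> 0 < bl -> bk <> bl ->
  / prob M b a bk 1 * (Rmin (c1 M b a bk) (c1 M b a bl) * Gb M b (Rmax bk bl)) <= overlap M b a bk bl 1.
Proof.
  intros HM Hb Ha Hk Hl Hne. unfold overlap.
  assert (Hp : 0 < prob M b a bk 1).
  { rewrite prob1_eq by auto. apply Rmult_lt_0_compat. apply c_pos; auto. apply Gb_pos; auto. }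
  apply Rmult_le_compat_l. left; apply Rinv_0_lt_compat; auto.
  rewrite (IntRM_ext M _ (MinF M (- b) true bk bl (c1 M b a bk) (c1 M b a bl))).
  - apply min_lb; auto; apply c_pos; auto.
  - intro z. unfold MinF, Dd, indA, ilt. destruct (Rlt_dec (sumM M z) 0) as [H|H]; [|ring].
    rewrite !pi_temp_lt by auto. reflexivity.
Qed.

Lemma overlap_lb2 M b a bk bl : (1 <= M)%nat -> 0 < b -> 0 < a < 1 -> 0 < bk -> 0 < bl -> bk <> bl ->
  / prob M b a bk 2 * (Rmin (c2 M b a bk) (c2 M b a bl) * Gb M b (Rmax bk bl)) <= overlap M b a bk bl 2.
Proof.
  intros HM Hb Ha Hk Hl Hne. unfold overlap.
  assert (Hp : 0 < prob M b a bk 2).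
  { rewrite prob2_eq by auto. apply Rmult_lt_0_compat. apply c_pos; auto. apply Gb_pos; auto. }
  apply Rmult_le_compat_l. left; apply Rinv_0_lt_compat; auto.
  rewrite (IntRM_ext M _ (MinF M b false bk bl (c2 M b a bk) (c2 M b a bl))).
  - rewrite <- Val_b_ge. apply min_lb; auto; apply c_pos; auto. auto. apply Rlt_le_trans with bk; [lra|apply Rmax_l].
  - intro z. unfold MinF, Dd, indA, ile. destruct (Rle_dec 0 (sumM M z)) as [H|H]; [|ring].
    rewrite !pi_temp_ge by auto. reflexivity.
Qed.

Lemma abs_bound (bk bl pk pl th : R) (Gf : R -> R) : 0 < pk -> 0 < pl -> 0 < Gf bk -> 0 < Gf bl -> th <= 1 ->
  (bk < bl -> th <= Gf bl / Gf bk /\ th <= pl / pk) ->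
  (bl < bk -> th <= pl / pk * (Gf bk / Gf bl)) -> bk <> bl ->
  th <= / pk * (Rmin (pk / Gf bk) (pl / Gf bl) * Gf (if Rle_dec bk bl then bl else bk)).
Proof.
  intros Hpk Hpl HGk HGl Hth H1 H2 Hne.
  destruct (Rle_dec bk bl) as [Hle|Hle].
  - destruct (H1 ltac:(lra)) as [A B]. unfold Rmin. destruct (Rle_dec (pk / Gf bk) (pl / Gf bl)).
    + replace (/ pk * (pk / Gf bk * Gf bl)) with (Gf bl / Gf bk) by (field; lra). auto.
    + replace (/ pk * (pl / Gf bl * Gf bl)) with (pl / pk) by (field; lra). auto.
  - specialize (H2 ltac:(lra)). unfold Rmin. destruct (Rle_dec (pk / Gf bk) (pl / Gf bl)).
    + replace (/ pk * (pk / Gf bk * Gf bk)) with 1 by (field; lra). auto.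
    + replace (/ pk * (pl / Gf bl * Gf bk)) with (pl / pk * (Gf bk / Gf bl)) by (field; lra). auto.
Qed.

Lemma Rmax_if x y : x <> y -> Rmax x y = if Rle_dec x y then y else x.
Proof. intro. unfold Rmax. destruct (Rle_dec x y); reflexivity. Qed.

Lemma frac_ge (x y : R) : 0 < x <= y -> x / y <= (1 + x) / (1 + y).
Proof. intro H. apply Rmult_le_reg_r with (y * (1 + y)). nra. field_simplify; nra. Qed.

Lemma pp_pos L be : 0 < pp L be.
Proof. unfold pp. pose proof (exp_pos (- (be * L))). apply Rdiv_lt_0_compat; lra. Qed.
Lemma qq_pos L be : 0 < qq L be.
Proof. unfold qq. pose proof (exp_pos (be * L)). apply Rdiv_lt_0_compat; lra. Qed.

Lemma exp_le_mono x y : x <= y -> exp x <= exp y.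
Proof. intro H. destruct (Req_dec x y). subst; lra. left; apply exp_increasing; lra. Qed.

Lemma pp_mono L b1 b2 : 0 <= L -> b1 <= b2 -> pp L b1 <= pp L b2.
Proof.
  intros HL H. unfold pp. pose proof (exp_pos (- (b1 * L))). pose proof (exp_pos (- (b2 * L))).
  assert (exp (- (b2 * L)) <= exp (- (b1 * L))) by (apply exp_le_mono; nra).
  unfold Rdiv. rewrite !Rmult_1_l. apply Rinv_le_contravar; lra.
Qed.

Lemma qq_anti L b1 b2 : 0 <= L -> b1 <= b2 -> qq L b2 <= qq L b1.
Proof.
  intros HL H. unfold qq. pose proof (exp_pos (b1 * L)). pose proof (exp_pos (b2 * L)).
  assert (exp (b1 * L) <= exp (b2 * L)) by (apply exp_le_mono; nra).
  unfold Rdiv. rewrite !Rmult_1_l. apply Rinv_le_contravar; lra.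
Qed.

Lemma pp_half L be : 0 <= L -> 0 <= be -> 1/2 <= pp L be.
Proof.
  intros. unfold pp. assert (exp (- (be * L)) <= 1) by (rewrite <- exp_0; apply exp_le_mono; nra).
  pose proof (exp_pos (- (be * L))). apply Rmult_le_reg_r with (2 * (1 + exp (- (be * L)))). lra.
  field_simplify; lra.
Qed.

Lemma pp_le1 L be : pp L be <= 1.
Proof. unfold pp. pose proof (exp_pos (- (be * L))). apply Rmult_le_reg_r with (1 + exp (- (be * L))); [lra|]. field_simplify; lra. Qed.


Lemma ln_le_mono x y : 0 < x -> x <= y -> ln x <= ln y.
Proof. intros. destruct (Req_dec x y). subst; lra. left; apply ln_increasing; lra. Qed.

Lemma ln_le_inv x y : 0 < x -> 0 < y -> ln x <= ln y -> x <= y.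
Proof. intros. rewrite <- (exp_ln x), <- (exp_ln y) by auto. apply exp_le_mono; auto. Qed.

Lemma pp_ratio L lc b1 b2 : 0 <= L -> (b2 - b1) * L <= lc -> b1 < b2 -> exp (- lc) <= pp L b1 / pp L b2.
Proof.
  intros HL Hc H. unfold pp.
  pose proof (exp_pos (- (b1 * L))). pose proof (exp_pos (- (b2 * L))).
  assert (exp (- (b2 * L)) <= exp (- (b1 * L))) by (apply exp_le_mono; nra).
  replace (1 / (1 + exp (- (b1 * L))) / (1 / (1 + exp (- (b2 * L))))) with ((1 + exp (- (b2 * L))) / (1 + exp (- (b1 * L)))) by (field; lra).
  eapply Rle_trans; [|apply frac_ge; lra].
  replace (exp (- (b2 * L)) / exp (- (b1 * L))) with (exp (- ((b2 - b1) * L))) by (rewrite <- exp_minus_div; f_equal; ring).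
  apply exp_le_mono; lra.
Qed.

Lemma qq_ratio L lc b1 b2 : 0 <= L -> (b2 - b1) * L <= lc -> b1 < b2 -> exp (- lc) <= qq L b2 / qq L b1.
Proof.
  intros HL Hc H. unfold qq.
  pose proof (exp_pos (b1 * L)). pose proof (exp_pos (b2 * L)).
  assert (exp (b1 * L) <= exp (b2 * L)) by (apply exp_le_mono; nra).
  replace (1 / (1 + exp (b2 * L)) / (1 / (1 + exp (b1 * L)))) with ((1 + exp (b1 * L)) / (1 + exp (b2 * L))) by (field; lra).
  eapply Rle_trans; [|apply frac_ge; lra].
  replace (exp (b1 * L) / exp (b2 * L)) with (exp (- ((b2 - b1) * L))) by (rewrite <- exp_minus_div; f_equal; ring).
  apply exp_le_mono; lra.
Qed.

Lemma Gb_ratio2 M b b1 b2 : (1 <= M)%nat -> 0 < b -> 0 < b1 < b2 -> b2 <= b1 * exp (ln (INR M) / INR M) ->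
  / sqrt (INR M) <= Gb M b b2 / Gb M b b1.
Proof.
  intros HM Hb H12 Hr.
  assert (HMp : 0 < INR M) by (apply lt_0_INR; lia).
  pose proof (Gb_pos M b b1 HM ltac:(lra)). pose proof (Gb_pos M b b2 HM ltac:(lra)).
  pose proof (Gb_ratio M b b1 b2 HM Hb ltac:(lra) ltac:(lra)) as HG.
  assert (Hs1 : 0 < sqrt b1) by (apply sqrt_lt_R0; lra). assert (Hs2 : 0 < sqrt b2) by (apply sqrt_lt_R0; lra).
  assert (Ht : / sqrt (INR M) <= (sqrt b1 / sqrt b2) ^ M).
  { apply ln_le_inv. apply Rinv_0_lt_compat, sqrt_lt_R0; auto. apply pow_lt. apply Rdiv_lt_0_compat; auto.
    rewrite ln_pow by (apply Rdiv_lt_0_compat; auto).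
    rewrite ln_Rinv by (apply sqrt_lt_R0; auto).
    assert (LS : forall x, 0 < x -> ln (sqrt x) = ln x / 2).
    { intros x Hx. assert (ln (sqrt x * sqrt x) = ln x) by (rewrite sqrt_sqrt; lra).
      rewrite ln_mult in H1 by (apply sqrt_lt_R0; auto). lra. }
    unfold Rdiv at 1. rewrite ln_mult, ln_Rinv, !LS by (auto; try lra; apply Rinv_0_lt_compat; auto).
    assert (Hl : ln b2 <= ln b1 + ln (INR M) / INR M).
    { rewrite <- (ln_exp (ln (INR M) / INR M)). rewrite <- ln_mult by (auto; try lra; apply exp_pos).
      apply ln_le_mono; lra. }
    apply Rmult_le_compat_l with (r := INR M / 2) in Hl; [|lra].
    replace (INR M / 2 * (ln b1 + ln (INR M) / INR M)) with (INR M / 2 * ln b1 + ln (INR M) / 2) in Hl by (field; lra).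
    lra. }
  apply Rmult_le_reg_r with (Gb M b b1); auto. unfold Rdiv. rewrite Rmult_assoc, Rinv_l, Rmult_1_r by lra.
  eapply Rle_trans; [|exact HG]. apply Rmult_le_compat_r; lra.
Qed.

Lemma GL (x : nat -> R) y n : x 0%nat <= y -> y < x n -> exists j, (j < n)%nat /\ x j <= y < x (S j).
Proof.
  induction n as [|n IH]; intros H0 Hn. exfalso; lra.
  destruct (Rlt_or_le y (x n)) as [H|H].
  - destruct (IH H0 H) as [j [Hj Hj']]. exists j. split; [lia|exact Hj'].
  - exists n. split; [lia|]. split; assumption.
Qed.

Lemma set_bounds M x : (1 <= M)%nat -> in_beta_set M x -> / INR M <= x <= 1.
Proof.
  intros HM H. assert (HMp : 1 <= INR M) by (apply (le_INR 1); auto).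
  assert (Hl : 0 <= ln (INR M)) by (rewrite <- ln_1; apply ln_le_mono; lra).
  destruct H as [[k [Hk ->]] | [k [Hk ->]]].
  - apply le_INR in Hk. pose proof (pos_INR k). unfold Rpower. split.
    + rewrite <- (exp_ln (INR M)) at 1 by lra. rewrite <- exp_Ropp. apply exp_le_mono.
      assert (- (INR M - INR k) / INR M >= -1). { apply Rle_ge. apply Rmult_le_reg_r with (INR M); [lra|]. field_simplify; lra. }
      nra.
    + rewrite <- exp_0. apply exp_le_mono.
      assert (- (INR M - INR k) / INR M <= 0). { apply Rmult_le_reg_r with (INR M); [lra|]. field_simplify; lra. }
      nra.
  - destruct Hk as [H1 H2]. apply le_INR in H1. apply le_INR in H2. simpl in H1. split.
    + unfold Rdiv. rewrite <- (Rmult_1_l (/ INR M)) at 1. apply Rmult_le_compat_r; auto. left; apply Rinv_0_lt_compat; lra.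
    + apply Rmult_le_reg_r with (INR M); [lra|]. field_simplify; lra.
Qed.

Lemma beta_mono N (beta : nat -> R) : (forall k, (k < N)%nat -> beta k < beta (S k)) ->
  forall i j, (i < j)%nat -> (j <= N)%nat -> beta i < beta j.
Proof.
  intros H i j Hij HjN. induction j as [|j IH]; [lia|].
  destruct (Nat.eq_dec i j) as [->|Hne]. apply H; lia.
  apply Rlt_trans with (beta j). apply IH; lia. apply H; lia.
Qed.

Lemma no_between N (beta : nat -> R) k i : (forall k, (k < N)%nat -> beta k < beta (S k)) -> (k < N)%nat -> (i <= N)%nat ->
  ~ (beta k < beta i < beta (S k)).
Proof.
  intros H Hk Hi [A B]. destruct (Nat.lt_ge_cases k i).
  - destruct (Nat.eq_dec i (S k)) as [->|Hne]. lra.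
    pose proof (beta_mono N beta H (S k) i ltac:(lia) Hi). lra.
  - destruct (Nat.eq_dec i k) as [->|Hne]. lra.
    pose proof (beta_mono N beta H i k ltac:(lia) ltac:(lia)). lra.
Qed.

Lemma step_le M N (beta : nat -> R) k : (1 <= M)%nat -> (forall k, (k < N)%nat -> beta k < beta (S k)) ->
  (forall x, (exists k, (k <= N)%nat /\ x = beta k) <-> in_beta_set M x) -> (k < N)%nat ->
  beta (S k) - beta k <= / INR M.
Proof.
  intros HM Hinc Hset Hk. assert (HMp : 1 <= INR M) by (apply (le_INR 1); auto).
  assert (Bk : / INR M <= beta k <= 1) by (apply set_bounds; auto; apply Hset; exists k; split; [lia|auto]).
  assert (Bk1 : / INR M <= beta (S k) <= 1) by (apply set_bounds; auto; apply Hset; exists (S k); split; [lia|auto]).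
  pose proof (Hinc k Hk).
  apply Rnot_lt_le. intro Hc.
  set (x := fun j : nat => INR (S j) / INR M).
  assert (X0 : x 0%nat <= beta k) by (unfold x; simpl; lra).
  assert (Xn : beta k < x (M - 1)%nat) by (unfold x; replace (S (M - 1)) with M by lia; unfold Rdiv; rewrite Rinv_r; lra).
  destruct (GL x (beta k) (M - 1) X0 Xn) as [j [Hj [A B]]].
  assert (Hin : in_beta_set M (x (S j))). { right. exists (S (S j)). split. lia. reflexivity. }
  apply Hset in Hin. destruct Hin as [i [Hi Ei]].
  apply (no_between N beta k i Hinc Hk Hi). rewrite <- Ei. split; auto.
  unfold x in *. rewrite (S_INR (S j)). replace ((INR (S j) + 1) / INR M) with (INR (S j) / INR M + / INR M) by (field; lra). lra.
Qed.

Lemma ratio_le M N (beta : nat -> R) k : (1 <= M)%nat -> (forall k, (k < N)%nat -> beta k < beta (S k)) ->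
  (forall x, (exists k, (k <= N)%nat /\ x = beta k) <-> in_beta_set M x) -> (k < N)%nat ->
  beta (S k) <= beta k * exp (ln (INR M) / INR M).
Proof.
  intros HM Hinc Hset Hk. assert (HMp : 1 <= INR M) by (apply (le_INR 1); auto).
  assert (Bk : / INR M <= beta k <= 1) by (apply set_bounds; auto; apply Hset; exists k; split; [lia|auto]).
  assert (Bk1 : / INR M <= beta (S k) <= 1) by (apply set_bounds; auto; apply Hset; exists (S k); split; [lia|auto]).
  pose proof (Hinc k Hk).
  apply Rnot_lt_le. intro Hc.
  set (x := fun j : nat => Rpower (INR M) (- (INR M - INR j) / INR M)).
  assert (X0 : x 0%nat <= beta k).
  { unfold x, Rpower. simpl INR. replace (- (INR M - 0) / INR M) with (-1) by (field; lra).
    rewrite <- (exp_ln (INR M)) in Bk by lra. rewrite <- exp_Ropp in Bk. replace (-1 * ln (INR M)) with (- ln (INR M)) by ring. lra. }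
  assert (Xn : beta k < x M).
  { unfold x. replace (- (INR M - INR M) / INR M) with 0 by (field; lra). rewrite Rpower_O by lra. lra. }
  destruct (GL x (beta k) M X0 Xn) as [j [Hj [A B]]].
  assert (Hin : in_beta_set M (x (S j))). { left. exists (S j). split. lia. reflexivity. }
  apply Hset in Hin. destruct Hin as [i [Hi Ei]].
  apply (no_between N beta k i Hinc Hk Hi). rewrite <- Ei. split; auto.
  assert (E : x (S j) = x j * exp (ln (INR M) / INR M)).
  { unfold x, Rpower. rewrite <- exp_plus. f_equal. rewrite S_INR. field. lra. }
  rewrite E. apply Rle_lt_trans with (beta k * exp (ln (INR M) / INR M)); auto.
  apply Rmult_le_compat_r. left; apply exp_pos. auto.
Qed.

Lemma prod1N_ext n h h' : (forall k, (1 <= k <= n)%nat -> h k = h' k) -> prod1N n h = prod1N n h'.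
Proof.
  induction n as [|n IH]; intro H. reflexivity.
  simpl. rewrite IH by (intros; apply H; lia). rewrite H by lia. reflexivity.
Qed.

Lemma prod1N_tel n (f : nat -> R) : (forall k, (k <= n)%nat -> 0 < f k) ->
  prod1N n (fun k => f (k - 1)%nat / f k) = f 0%nat / f n.
Proof.
  induction n as [|n IH]; intro H. simpl. field. pose proof (H 0%nat ltac:(lia)); lra.
  simpl prod1N. rewrite IH by (intros; apply H; lia). cbv beta. replace (S n - 1)%nat with n by lia. try rewrite Nat.sub_0_r.
  pose proof (H n ltac:(lia)). pose proof (H (S n) ltac:(lia)). field. lra.
Qed.

Lemma ratio_ge1 x y : 0 < x -> x <= y -> 1 <= y / x.
Proof. intros. apply Rmult_le_reg_r with x; auto. unfold Rdiv. rewrite Rmult_assoc, Rinv_l; lra. Qed.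

Lemma prod1N_one n : prod1N n (fun _ => 1) = 1.
Proof. induction n as [|n IH]. reflexivity. simpl. rewrite IH. ring. Qed.

Theorem mainTheorem12 (b c : R) (hb : 0 < b) (hc : 1 <= c)
  (M : nat) (hM : (1 <= M)%nat)
  (a : R) (ha1 : 1/2 <= a) (ha2 : a < 1) (hac : a / (1 - a) <= c ^ M)
  (N : nat) (beta : nat -> R)
  (hinc : forall k, (k < N)%nat -> beta k < beta (S k))
  (hset : forall x, (exists k, (k <= N)%nat /\ x = beta k) <-> in_beta_set M x) :
  (forall k, (k < N)%nat -> prob M b a (beta k) 1 <= prob M b a (beta (S k)) 1)
  /\ 1/2 <= gammaA M b a N beta
  /\ (forall k l j, (k <= N)%nat -> (l <= N)%nat -> (k = S l \/ l = S k) ->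
        (j = 1 \/ j = 2)%nat ->
        / (2 * c * sqrt (INR M)) <= overlap M b a (beta k) (beta l) j).
Proof.
  assert (Ha : 0 < a < 1) by lra.
  assert (HMp : 1 <= INR M) by (apply (le_INR 1); auto).
  assert (Hc0 : 0 <= ln c) by (rewrite <- ln_1; apply ln_le_mono; lra).
  set (L := La a).
  assert (HL0 : 0 <= L) by (unfold L, La; pose proof (ln_le_mono (1 - a) a ltac:(lra) ltac:(lra)); lra).
  assert (HLc : L <= INR M * ln c).
  { unfold L, La. rewrite <- ln_pow by lra.
    replace (ln a - ln (1 - a)) with (ln (a / (1 - a))).
    apply ln_le_mono; auto. apply Rdiv_lt_0_compat; lra.
    unfold Rdiv. rewrite ln_mult, ln_Rinv by (try apply Rinv_0_lt_compat; lra). ring. }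
  assert (Hpos : forall i, (i <= N)%nat -> 0 < beta i).
  { intros i Hi. assert (in_beta_set M (beta i)) by (apply hset; exists i; auto).
    pose proof (set_bounds M _ hM H). assert (0 < / INR M) by (apply Rinv_0_lt_compat; lra). lra. }
  assert (Hp1 : forall i, (i <= N)%nat -> prob M b a (beta i) 1 = pp L (beta i)) by (intros; apply prob1_pp; auto).
  assert (Hp2 : forall i, (i <= N)%nat -> prob M b a (beta i) 2 = qq L (beta i)) by (intros; apply prob2_qq; auto).
  assert (Hstep : forall k, (k < N)%nat -> (beta (S k) - beta k) * L <= ln c).
  { intros k Hk. pose proof (step_le M N beta k hM hinc hset Hk). pose proof (hinc k Hk).
    apply Rle_trans with (/ INR M * (INR M * ln c)). apply Rmult_le_compat; lra.
    right. field. lra. }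
  assert (Hexpc : exp (- ln c) = / c) by (rewrite exp_Ropp, exp_ln; lra).
  split; [|split].
  - intros k Hk. rewrite !Hp1 by lia. apply pp_mono; auto. left; apply hinc; auto.
  - unfold gammaA. cbv zeta.
    rewrite (prod1N_ext N _ (fun k => pp L (beta (k - 1)%nat) / pp L (beta k))).
    2:{ intros k Hk. rewrite !Hp1 by lia. apply Rmin_right.
        apply Rmult_le_reg_r with (pp L (beta k)). apply pp_pos.
        unfold Rdiv. rewrite Rmult_assoc, Rinv_l, Rmult_1_r, Rmult_1_l by (pose proof (pp_pos L (beta k)); lra).
        apply pp_mono; auto. pose proof (hinc (k - 1)%nat ltac:(lia)) as Hh. replace (S (k - 1)) with k in Hh by lia. lra. }
    rewrite (prod1N_ext N (fun k => Rmin 1 (prob M b a (beta (k - 1)%nat) 2 / prob M b a (beta k) 2)) (fun _ => 1)).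
    2:{ intros k Hk. rewrite !Hp2 by lia. apply Rmin_left.
        apply Rmult_le_reg_r with (qq L (beta k)). apply qq_pos.
        unfold Rdiv. rewrite Rmult_assoc, Rinv_l, Rmult_1_r, Rmult_1_l by (pose proof (qq_pos L (beta k)); lra).
        apply qq_anti; auto. pose proof (hinc (k - 1)%nat ltac:(lia)) as Hh. replace (S (k - 1)) with k in Hh by lia. lra. }
    assert (T : prod1N N (fun k => pp L (beta (k - 1)%nat) / pp L (beta k)) = pp L (beta 0%nat) / pp L (beta N)) by (apply (prod1N_tel N (fun i => pp L (beta i))); intros; apply pp_pos).
    rewrite T, prod1N_one.
    apply Rmin_glb; [|lra].
    pose proof (pp_half L (beta 0%nat) HL0 ltac:(left; apply Hpos; lia)).
    pose proof (pp_le1 L (beta N)). pose proof (pp_pos L (beta N)).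
    apply Rle_trans with (pp L (beta 0%nat)); auto.
    apply Rmult_le_reg_r with (pp L (beta N)); auto. unfold Rdiv. rewrite Rmult_assoc, Rinv_l, Rmult_1_r by lra.
    pose proof (pp_pos L (beta 0%nat)). nra.
  - intros k l j Hk Hl Hadj Hj.
    assert (Hsq : 1 <= sqrt (INR M)) by (rewrite <- sqrt_1; apply sqrt_le_1_alt; lra).
    set (th := / (c * sqrt (INR M))).
    assert (Hth0 : / (2 * c * sqrt (INR M)) <= th).
    { unfold th. apply Rinv_le_contravar. nra. nra. }
    assert (Hth1 : th <= / sqrt (INR M)).
    { unfold th. apply Rinv_le_contravar. lra. nra. }
    assert (Hth2 : th <= / c). { unfold th. apply Rinv_le_contravar. lra. nra. }
    assert (Hth3 : th <= / c * / sqrt (INR M)). { unfold th. rewrite Rinv_mult. lra. }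
    assert (Hth4 : th <= 1). { assert (/ sqrt (INR M) <= 1) by (rewrite <- Rinv_1; apply Rinv_le_contravar; lra). lra. }
    assert (ADJ : forall lo, (lo < N)%nat ->
      / sqrt (INR M) <= Gb M b (beta (S lo)) / Gb M b (beta lo) /\
      / c <= pp L (beta lo) / pp L (beta (S lo)) /\ / c <= qq L (beta (S lo)) / qq L (beta lo) /\
      1 <= pp L (beta (S lo)) / pp L (beta lo) /\ 1 <= qq L (beta lo) / qq L (beta (S lo))).
    { intros lo Hlo. pose proof (hinc lo Hlo). pose proof (Hpos lo ltac:(lia)). pose proof (Hpos (S lo) ltac:(lia)).
      split. apply Gb_ratio2; auto. apply ratio_le with N; auto.
      split. rewrite <- Hexpc. apply pp_ratio; auto.
      split. rewrite <- Hexpc. apply qq_ratio; auto.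
      pose proof (pp_pos L (beta lo)). pose proof (pp_pos L (beta (S lo))).
      pose proof (qq_pos L (beta lo)). pose proof (qq_pos L (beta (S lo))).
      pose proof (pp_mono L (beta lo) (beta (S lo)) HL0 ltac:(lra)).
      pose proof (qq_anti L (beta lo) (beta (S lo)) HL0 ltac:(lra)).
      split; apply ratio_ge1; lra. }
    pose proof (Hpos k Hk) as Pk. pose proof (Hpos l Hl) as Pl.
    assert (Hne : beta k <> beta l).
    { destruct Hadj as [->| ->]; [pose proof (hinc l ltac:(lia))|pose proof (hinc k ltac:(lia))]; lra. }
    pose proof (Gb_pos M b (beta k) hM Pk). pose proof (Gb_pos M b (beta l) hM Pl).
    apply Rle_trans with th; auto.
    destruct Hj as [-> | ->].
    + eapply Rle_trans; [|apply overlap_lb1; auto].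
      assert (E1 : forall i, (i <= N)%nat -> c1 M b a (beta i) = pp L (beta i) / Gb M b (beta i)).
      { intros i Hi. rewrite <- Hp1 by auto. rewrite prob1_eq by auto. field. apply Rgt_not_eq, Gb_pos; auto. }
      rewrite (E1 k Hk), (E1 l Hl), (Hp1 k Hk), Rmax_if by auto.
      apply (abs_bound _ _ _ _ _ (Gb M b)); auto; try apply pp_pos.
      * intro Hkl. destruct Hadj as [->| ->]. pose proof (hinc l ltac:(lia)); lra.
        destruct (ADJ k ltac:(lia)) as [A1 [A2 [A3 [A4 A5]]]]. split; lra.
      * intro Hkl. destruct Hadj as [->| ->]. 2:{ pose proof (hinc k ltac:(lia)); lra. }
        destruct (ADJ l ltac:(lia)) as [A1 [A2 [A3 [A4 A5]]]].
        apply Rle_trans with (/ c * / sqrt (INR M)); auto. apply Rmult_le_compat; try lra.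
        left; apply Rinv_0_lt_compat; lra. left; apply Rinv_0_lt_compat; lra.
    + eapply Rle_trans; [|apply overlap_lb2; auto].
      assert (E2 : forall i, (i <= N)%nat -> c2 M b a (beta i) = qq L (beta i) / Gb M b (beta i)).
      { intros i Hi. rewrite <- Hp2 by auto. rewrite prob2_eq by auto. field. apply Rgt_not_eq, Gb_pos; auto. }
      rewrite (E2 k Hk), (E2 l Hl), (Hp2 k Hk), Rmax_if by auto.
      apply (abs_bound _ _ _ _ _ (Gb M b)); auto; try apply qq_pos.
      * intro Hkl. destruct Hadj as [->| ->]. pose proof (hinc l ltac:(lia)); lra.
        destruct (ADJ k ltac:(lia)) as [A1 [A2 [A3 [A4 A5]]]]. split; lra.
      * intro Hkl. destruct Hadj as [->| ->]. 2:{ pose proof (hinc k ltac:(lia)); lra. }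
        destruct (ADJ l ltac:(lia)) as [A1 [A2 [A3 [A4 A5]]]].
        apply Rle_trans with (1 * / sqrt (INR M)); [lra|]. apply Rmult_le_compat; try lra.
        left; apply Rinv_0_lt_compat; lra.
Qed.
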